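(* Let $p>1$ and let $s,q,V:\mathbb{R}^3\to(0,\infty)$ be radially symmetric $C^2$-functions, and put $T=2\pi\sqrt{s(0)/q(0)}$. Assume (H2), (H3), (H4) below and either (H1) or (H1)': (H1) $T\sqrt{q(x)/s(x)}<2\pi$ for all $x\neq0$; (H1)' $T\sqrt{q(x)/s(x)}>2\pi$ for all $x\neq 0$; (H2) $\bigl|2\pi-T\sqrt{q(x)/s(x)}\bigr|^{\frac{1}{p-1}}\to 0$ in the $C^2$-sense as $x\to 0$; (H3) $\sup_{x\in\mathbb{R}^3}\bigl|2\pi-T\sqrt{q(x)/s(x)}\bigr|\,e^{\delta(p-1)|x|}<\infty$ for some $\delta>0$; (H4) $\sup_{x\in\mathbb{R}^3} q(x)/V(x)<\infty$. Then there exists a continuum of $T$-periodic $\mathbb{C}^3$-valued monochromatic breather solutions $U(x,t)=e^{\frac{2\pi}{T}it}\mathbf{U}(x)$ of $$s(x)\partial_t^2U+\nabla\times\nabla\times U+q(x)U\pm V(x)|U|^{p-1}U=0\quad\text{on }\mathbb{R}^3\times\mathbb{R},$$ with sign $+$ in case (H1) and sign $-$ in case (H1)', satisfying $\sup_{x\in\mathbb{R}^3}|\mathbf{U}(x)|e^{\delta|x|}<\infty$.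
   Context: A function $f:\mathbb{R}^3\to\mathbb{R}$ is radially symmetric if $f(x)$ depends only on $|x|$. For $f:\mathbb{R}^3\to\mathbb{R}$ one says $f(x)\to 0$ in the $C^2$-sense as $x\to 0$ if $f(x)\to0$, $\nabla f(x)\to 0$ and $D^2f(x)\to 0$ as $x\to 0$. Solutions are classical; $|U|$ denotes the Euclidean norm in $\mathbb{C}^3$. *)

(* Defs.v *)
From Stdlib Require Import Reals.
From Coquelicot Require Import Coquelicot.
Open Scope R_scope.

Definition R3 := (R * R * R)%type.
Definition origin : R3 := (0, 0, 0).
Definition x1 (x : R3) : R := fst (fst x).
Definition x2 (x : R3) : R := snd (fst x).
Definition x3 (x : R3) : R := snd x.
Definition vnorm (x : R3) : R := sqrt (x1 x ^ 2 + x2 x ^ 2 + x3 x ^ 2).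

Inductive ax := A1 | A2 | A3.
Definition shift (i : ax) (x : R3) (h : R) : R3 :=
  match i with
  | A1 => (x1 x + h, x2 x, x3 x)
  | A2 => (x1 x, x2 x + h, x3 x)
  | A3 => (x1 x, x2 x, x3 x + h)
  end.

Definition ex_pd (i : ax) (f : R3 -> R) (x : R3) : Prop :=
  ex_derive (fun h => f (shift i x h)) 0.
Definition pd (i : ax) (f : R3 -> R) (x : R3) : R :=
  Derive (fun h => f (shift i x h)) 0.

Definition isC1 (f : R3 -> R) : Prop :=
  (forall x, continuous f x) /\
  (forall i x, ex_pd i f x /\ continuous (pd i f) x).
Definition isC2 (f : R3 -> R) : Prop :=
  isC1 f /\ forall i, isC1 (pd i f).

Definition radial (f : R3 -> R) : Prop :=
  forall x y, vnorm x = vnorm y -> f x = f y.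

Definition C2_to_zero_at_origin (f : R3 -> R) : Prop :=
  filterlim f (locally' origin) (locally 0) /\
  (forall i, filterlim (pd i f) (locally' origin) (locally 0)) /\
  (forall i j, filterlim (pd i (pd j f)) (locally' origin) (locally 0)).

(** a^b for a >= 0, b > 0 (with 0^b = 0). *)
Definition rpow (a b : R) : R :=
  if Rlt_dec 0 a then Rpower a b else 0.

Definition period (s q : R3 -> R) : R := 2 * PI * sqrt (s origin / q origin).

Definition C3 := (C * C * C)%type.
Definition comp (k : ax) (u : C3) : C :=
  match k with A1 => fst (fst u) | A2 => snd (fst u) | A3 => snd u end.
Definition c3norm (u : C3) : R :=
  sqrt (Cmod (comp A1 u) ^ 2 + Cmod (comp A2 u) ^ 2 + Cmod (comp A3 u) ^ 2).

Definition isC2_field (U : R3 -> C3) : Prop :=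
  forall k, isC2 (fun x => Re (comp k (U x))) /\ isC2 (fun x => Im (comp k (U x))).

Definition pdC (i : ax) (g : R3 -> C) (x : R3) : C :=
  (pd i (fun y => Re (g y)) x, pd i (fun y => Im (g y)) x).

Definition curl (U : R3 -> C3) : R3 -> C3 := fun x =>
  ( Cminus (pdC A2 (fun y => comp A3 (U y)) x) (pdC A3 (fun y => comp A2 (U y)) x),
    Cminus (pdC A3 (fun y => comp A1 (U y)) x) (pdC A1 (fun y => comp A3 (U y)) x),
    Cminus (pdC A1 (fun y => comp A2 (U y)) x) (pdC A2 (fun y => comp A1 (U y)) x) ).

Definition d2t (W : R3 -> R -> C3) (k : ax) (x : R3) (t : R) : C :=
  (Derive_n (fun τ => Re (comp k (W x τ))) 2 t,
   Derive_n (fun τ => Im (comp k (W x τ))) 2 t).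

Definition monochromatic (T : R) (U : R3 -> C3) : R3 -> R -> C3 := fun x t =>
  let e := (cos (2 * PI / T * t), sin (2 * PI / T * t)) : C in
  (Cmult e (comp A1 (U x)), Cmult e (comp A2 (U x)), Cmult e (comp A3 (U x))).

Definition solves (sigma p : R) (s q V : R3 -> R) (W : R3 -> R -> C3) : Prop :=
  forall (x : R3) (t : R) (k : ax),
    Cplus (Cplus (Cplus
      (Cmult (RtoC (s x)) (d2t W k x t))
      (comp k (curl (curl (fun y => W y t)) x)))
      (Cmult (RtoC (q x)) (comp k (W x t))))
      (Cmult (RtoC (sigma * V x * rpow (c3norm (W x t)) (p - 1))) (comp k (W x t)))
    = RtoC 0.

(** A continuum (a family injectively parametrized by the interval (0,1)) of
    T-periodic monochromatic breathers U(x,t) = e^{(2pi/T) i t} U(x) with U C^2,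
    solving the equation with sign sigma, and sup_x |U(x)| e^{delta |x|} < oo. *)
Definition continuum_of_breathers (sigma p : R) (s q V : R3 -> R) (delta : R) : Prop :=
  exists F : R -> (R3 -> C3),
    (forall a b, 0 < a < 1 -> 0 < b < 1 -> a <> b -> F a <> F b) /\
    (forall a, 0 < a < 1 ->
       isC2_field (F a) /\
       solves sigma p s q V (monochromatic (period s q) (F a)) /\
       exists M : R, forall x, c3norm (F a x) * exp (delta * vnorm x) <= M).

(* Main.v *)
From Pilot Require Import Defs.
From Stdlib Require Import Reals.
From Coquelicot Require Import Coquelicot.
Open Scope R_scope.
From Stdlib Require Import Lra Lia Psatz FunctionalExtensionality.
Import Pilot.Defs.

Definition coord (m : ax) (x : R3) : R := match m with A1 => x1 x | A2 => x2 x | A3 => x3 x end.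
Definition dl (i m : ax) : R := match i with A1 => match m with A1 => 1 | _ => 0 end | A2 => match m with A2 => 1 | _ => 0 end | A3 => match m with A3 => 1 | _ => 0 end end.

Lemma coord_shift i m x t : coord m (shift i x t) = coord m x + t * dl i m.
Proof. destruct i, m; destruct x as [[a b] c]; unfold coord, shift, dl, x1, x2, x3; simpl; ring. Qed.


Lemma R3_ext (x y : R3) : x1 x = x1 y -> x2 x = x2 y -> x3 x = x3 y -> x = y.
Proof. destruct x as [[a b] c], y as [[d e] f]; unfold x1,x2,x3; simpl; intros; subst; reflexivity. Qed.

Lemma R3_coord_ext (x y : R3) : (forall m, coord m x = coord m y) -> x = y.
Proof. intro H; apply R3_ext; [apply (H A1)|apply (H A2)|apply (H A3)]. Qed.

Lemma shift_shift i x a b : shift i (shift i x a) b = shift i x (a + b).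
Proof. apply R3_coord_ext; intro m; rewrite !coord_shift; ring. Qed.

Lemma cont_R3_iff (f : R3 -> R) x :
  continuous f x <-> forall eps, 0 < eps -> exists d, 0 < d /\ forall y,
    Rabs (x1 y - x1 x) < d -> Rabs (x2 y - x2 x) < d -> Rabs (x3 y - x3 x) < d ->
    Rabs (f y - f x) < eps.
Proof.
  destruct x as [[a b] c]; unfold x1,x2,x3; simpl.
  split.
  - intros H eps Heps. unfold continuous in H. rewrite filterlim_locally in H.
    destruct (H (mkposreal eps Heps)) as [d Hd]. exists d; split; [apply cond_pos|].
    intros [[u v] w]; simpl; intros. apply (Hd ((u,v),w)).
    split; [split|]; assumption.
  - intros H. unfold continuous. apply filterlim_locally. intros eps.
    destruct (H eps (cond_pos eps)) as [d [Hd Hy]]. exists (mkposreal d Hd).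
    intros [[u v] w] [[B1 B2] B3]. apply Hy; assumption.
Qed.

Lemma cont_to_R3 (g : R -> R3) t :
  continuous (fun s => x1 (g s)) t -> continuous (fun s => x2 (g s)) t ->
  continuous (fun s => x3 (g s)) t -> continuous g t.
Proof.
  intros H1 H2 H3. unfold continuous in *.
  pose proof (proj1 (filterlim_locally _ _) H1) as H1'. pose proof (proj1 (filterlim_locally _ _) H2) as H2'.
  pose proof (proj1 (filterlim_locally _ _) H3) as H3'.
  apply (proj2 (filterlim_locally _ _)). intros eps. generalize (H1' eps) (H2' eps) (H3' eps). intros A B C.
  generalize (filter_and _ _ A (filter_and _ _ B C)).
  apply filter_imp. intros s [P [Q S]].
  destruct (g t) as [[a b] c]. destruct (g s) as [[u v] w].
  unfold x1,x2,x3 in *; simpl in *.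
  split; [split|]; assumption.
Qed.

Lemma shift0 i x : shift i x 0 = x.
Proof. apply R3_coord_ext; intro m; rewrite coord_shift; ring. Qed.

Lemma cont_coord m x : continuous (coord m) x.
Proof.
  apply cont_R3_iff. intros eps He. exists eps; split; auto.
  intros y H1 H2 H3; destruct m; simpl; auto.
Qed.

Lemma cont_affine a b t : continuous (fun s : R => a + s * b) t.
Proof. apply (ex_derive_continuous (fun s => a + s*b)). auto_derive; auto. Qed.

Lemma cont_shift i x t : continuous (fun s => shift i x s) t.
Proof.
  apply cont_to_R3;
  [ apply (continuous_ext (fun s => coord A1 x + s * dl i A1))
  | apply (continuous_ext (fun s => coord A2 x + s * dl i A2))
  | apply (continuous_ext (fun s => coord A3 x + s * dl i A3))];
  try (intro s; rewrite <- coord_shift; reflexivity);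
  apply cont_affine.
Qed.

Lemma locally_shift i x (P : R3 -> Prop) : locally x P -> locally 0 (fun t => P (shift i x t)).
Proof.
  intro H. pose proof (cont_shift i x 0) as C. unfold continuous in C.
  rewrite shift0 in C. apply C. exact H.
Qed.

Lemma line_deriv i f x t0 : ex_pd i f (shift i x t0) ->
  is_derive (fun t => f (shift i x t)) t0 (pd i f (shift i x t0)).
Proof.
  intro H. unfold ex_pd, pd in *.
  apply Derive_correct in H.
  apply (is_derive_ext (fun t => (fun u => f (shift i (shift i x t0) u)) (t - t0))).
  { intro t. simpl. rewrite shift_shift. f_equal. f_equal. ring. }
  replace (Derive (fun h : R => f (shift i (shift i x t0) h)) 0) with
    (scal 1 (Derive (fun h : R => f (shift i (shift i x t0) h)) 0)).
  2:{ apply (scal_one (V := R_NormedModule)). }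
  apply (is_derive_comp (fun u => f (shift i (shift i x t0) u)) (fun t => t - t0)).
  - replace (t0 - t0) with 0 by ring. exact H.
  - auto_derive; auto; ring.
Qed.

Lemma pd_ext_loc i f g x : locally x (fun y => f y = g y) ->
  pd i f x = pd i g x /\ (ex_pd i f x -> ex_pd i g x).
Proof.
  intro H. apply (locally_shift i) in H. unfold pd, ex_pd. split.
  - apply Derive_ext_loc. exact H.
  - intro E. eapply ex_derive_ext_loc; [exact H| exact E].
Qed.

Lemma pd_mult i f g x : ex_pd i f x -> ex_pd i g x ->
  ex_pd i (fun y => f y * g y) x /\ pd i (fun y => f y * g y) x = pd i f x * g x + f x * pd i g x.
Proof.
  unfold ex_pd, pd; intros A B. split.
  - apply (ex_derive_mult (fun h => f (shift i x h)) (fun h => g (shift i x h))); auto.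
  - rewrite (Derive_mult (fun h => f (shift i x h)) (fun h => g (shift i x h))); auto.
    rewrite shift0; reflexivity.
Qed.

Lemma pd_plus i f g x : ex_pd i f x -> ex_pd i g x ->
  ex_pd i (fun y => f y + g y) x /\ pd i (fun y => f y + g y) x = pd i f x + pd i g x.
Proof.
  unfold ex_pd, pd; intros A B. split.
  - apply (ex_derive_plus (fun h => f (shift i x h)) (fun h => g (shift i x h))); auto.
  - rewrite (Derive_plus (fun h => f (shift i x h)) (fun h => g (shift i x h))); auto.
Qed.

Lemma pd_comp i (phi : R -> R) d f x : is_derive phi (f x) d -> ex_pd i f x ->
  ex_pd i (fun y => phi (f y)) x /\ pd i (fun y => phi (f y)) x = d * pd i f x.
Proof.
  unfold ex_pd, pd; intros A0 B. apply Derive_correct in B.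
  assert (A : is_derive phi (f (shift i x 0)) d) by (rewrite shift0; exact A0).
  pose proof (is_derive_comp phi (fun h => f (shift i x h)) 0 d _ A B) as C.
  split.
  - eexists; exact C.
  - etransitivity; [apply is_derive_unique; exact C|]. simpl. unfold scal; simpl. unfold mult; simpl. ring.
Qed.

Lemma pd_const i c x : ex_pd i (fun _ => c) x /\ pd i (fun _ => c) x = 0.
Proof. unfold ex_pd, pd; split. apply ex_derive_const. apply Derive_const. Qed.

Lemma pd_coord i m x : ex_pd i (coord m) x /\ pd i (coord m) x = dl i m.
Proof.
  unfold ex_pd, pd.
  assert (E : forall h, coord m (shift i x h) = coord m x + h * dl i m) by (intro; apply coord_shift).
  split.
  - eapply ex_derive_ext. intro h; symmetry; apply E. auto_derive; auto.
  - rewrite (Derive_ext _ _ _ E). apply is_derive_unique. auto_derive; auto. ring.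
Qed.

Lemma pd_scal i c f x : pd i (fun y => c * f y) x = c * pd i f x.
Proof. unfold pd. apply Derive_scal. Qed.

Definition C1on (Om : R3 -> Prop) (f : R3 -> R) : Prop :=
  forall x, Om x -> continuous f x /\ forall i, ex_pd i f x /\ continuous (pd i f) x.
Definition C2on (Om : R3 -> Prop) (f : R3 -> R) : Prop :=
  C1on Om f /\ forall i, C1on Om (pd i f).
Definition openR3 (Om : R3 -> Prop) : Prop := forall x, Om x -> locally x Om.

Lemma cont_mult3 (f g : R3 -> R) x : continuous f x -> continuous g x ->
  continuous (fun y => f y * g y) x.
Proof. intros A B. apply (continuous_mult f g x A B). Qed.

Lemma cont_plus3 (f g : R3 -> R) x : continuous f x -> continuous g x ->
  continuous (fun y => f y + g y) x.
Proof. intros A B. apply (continuous_plus f g x A B). Qed.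

Lemma cont_compR (f : R3 -> R) (phi : R -> R) x : continuous f x -> continuous phi (f x) ->
  continuous (fun y => phi (f y)) x.
Proof. intros A B. apply (continuous_comp f phi x A B). Qed.

Lemma cont_const3 (c : R) x : continuous (fun _ : R3 => c) x.
Proof. apply continuous_const. Qed.

Lemma loc_eq (Om : R3 -> Prop) (f g : R3 -> R) x : openR3 Om -> Om x ->
  (forall y, Om y -> f y = g y) -> locally x (fun y => f y = g y).
Proof. intros O H E. apply (filter_imp Om); auto. Qed.

Lemma C1on_ext Om f g : openR3 Om -> (forall x, Om x -> f x = g x) -> C1on Om f -> C1on Om g.
Proof.
  intros O E C x Hx.
  assert (PE : forall y i, Om y -> pd i f y = pd i g y /\ (ex_pd i f y -> ex_pd i g y)).
  { intros y i Hy. apply pd_ext_loc. apply (loc_eq Om); auto. }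
  destruct (C x Hx) as [C1 C2]. split.
  - apply (continuous_ext_loc g f x). apply (loc_eq Om); auto. exact C1.
  - intro i. destruct (C2 i) as [D1 D2]. split.
    + apply (PE x i Hx). exact D1.
    + apply (continuous_ext_loc (pd i g) (pd i f) x). apply (loc_eq Om); auto.
      intros y Hy; apply (PE y i Hy). exact D2.
Qed.

Lemma C2on_ext Om f g : openR3 Om -> (forall x, Om x -> f x = g x) -> C2on Om f -> C2on Om g.
Proof.
  intros O E [C D]. split.
  - apply (C1on_ext Om f); auto.
  - intro i. apply (C1on_ext Om (pd i f)); auto.
    intros y Hy. apply pd_ext_loc. apply (loc_eq Om); auto.
Qed.

Lemma C1on_mult Om f g : openR3 Om -> C1on Om f -> C1on Om g -> C1on Om (fun y => f y * g y).
Proof.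
  intros O Cf Cg x Hx. destruct (Cf x Hx) as [F1 F2]. destruct (Cg x Hx) as [G1 G2].
  split. { apply cont_mult3; auto. }
  intro i. destruct (F2 i) as [F3 F4]. destruct (G2 i) as [G3 G4]. split.
  - apply (pd_mult i f g x F3 G3).
  - apply (continuous_ext_loc _ (fun y => pd i f y * g y + f y * pd i g y)).
    + apply (loc_eq Om); auto. intros y Hy. symmetry. apply (pd_mult i f g y).
      apply (Cf y Hy). apply (Cg y Hy).
    + apply cont_plus3; apply cont_mult3; auto.
Qed.

Lemma C1on_plus Om f g : openR3 Om -> C1on Om f -> C1on Om g -> C1on Om (fun y => f y + g y).
Proof.
  intros O Cf Cg x Hx. destruct (Cf x Hx) as [F1 F2]. destruct (Cg x Hx) as [G1 G2].
  split. { apply cont_plus3; auto. }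
  intro i. destruct (F2 i) as [F3 F4]. destruct (G2 i) as [G3 G4]. split.
  - apply (pd_plus i f g x F3 G3).
  - apply (continuous_ext_loc _ (fun y => pd i f y + pd i g y)).
    + apply (loc_eq Om); auto. intros y Hy. symmetry. apply (pd_plus i f g y).
      apply (Cf y Hy). apply (Cg y Hy).
    + apply cont_plus3; auto.
Qed.

Lemma C1on_comp Om (I : R -> Prop) (phi phi1 : R -> R) f : openR3 Om ->
  (forall x, Om x -> I (f x)) ->
  (forall y, I y -> is_derive phi y (phi1 y) /\ continuous phi1 y) ->
  C1on Om f -> C1on Om (fun y => phi (f y)).
Proof.
  intros O HI Hphi Cf x Hx. destruct (Cf x Hx) as [F1 F2].
  destruct (Hphi (f x) (HI x Hx)) as [P1 P2].
  split. { apply cont_compR; auto. apply (ex_derive_continuous (K:=R_AbsRing) (V:=R_NormedModule) phi). eexists; exact P1. }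
  intro i. destruct (F2 i) as [F3 F4]. split.
  - apply (pd_comp i phi (phi1 (f x)) f x P1 F3).
  - apply (continuous_ext_loc _ (fun y => phi1 (f y) * pd i f y)).
    + apply (loc_eq Om); auto. intros y Hy. symmetry. apply (pd_comp i phi (phi1 (f y)) f y).
      apply (Hphi _ (HI y Hy)). apply (Cf y Hy).
    + apply cont_mult3; auto. apply cont_compR; auto.
Qed.

Lemma C1on_const Om c : C1on Om (fun _ => c).
Proof.
  intros x Hx. split. apply cont_const3. intro i. split. apply pd_const.
  apply (continuous_ext (fun _ => 0)). intro y. symmetry; apply pd_const. apply cont_const3.
Qed.

Lemma C1on_coord Om m : C1on Om (coord m).
Proof.
  intros x Hx. split. apply cont_coord. intro i. split. apply pd_coord.
  apply (continuous_ext (fun _ => dl i m)). intro y. symmetry; apply pd_coord. apply cont_const3.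
Qed.

Lemma C2on_const Om c : C2on Om (fun _ => c).
Proof.
  split. apply C1on_const. intro i.
  replace (pd i (fun _ : R3 => c)) with (fun _ : R3 => 0).
  apply C1on_const. extensionality y; symmetry; apply pd_const.
Qed.

Lemma C2on_coord Om m : C2on Om (coord m).
Proof.
  split. apply C1on_coord. intro i.
  replace (pd i (coord m)) with (fun _ : R3 => dl i m).
  apply C1on_const. extensionality y; symmetry; apply pd_coord.
Qed.

Lemma C2on_mult Om f g : openR3 Om -> C2on Om f -> C2on Om g -> C2on Om (fun y => f y * g y).
Proof.
  intros O [Cf Df] [Cg Dg]. split. apply C1on_mult; auto.
  intro i. apply (C1on_ext Om (fun y => pd i f y * g y + f y * pd i g y)).
  - exact O.
  - intros y Hy. symmetry. apply (pd_mult i f g y). apply (Cf y Hy). apply (Cg y Hy).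
  - apply C1on_plus; [exact O| |]; apply C1on_mult; auto.
Qed.

Lemma C2on_plus Om f g : openR3 Om -> C2on Om f -> C2on Om g -> C2on Om (fun y => f y + g y).
Proof.
  intros O [Cf Df] [Cg Dg]. split. apply C1on_plus; auto.
  intro i. apply (C1on_ext Om (fun y => pd i f y + pd i g y)). exact O.
  - intros y Hy. symmetry. apply (pd_plus i f g y). apply (Cf y Hy). apply (Cg y Hy).
  - apply C1on_plus; auto.
Qed.

Lemma C2on_comp Om (I : R -> Prop) (phi phi1 phi2 : R -> R) f : openR3 Om ->
  (forall x, Om x -> I (f x)) ->
  (forall y, I y -> is_derive phi y (phi1 y) /\ is_derive phi1 y (phi2 y) /\ continuous phi2 y) ->
  C2on Om f -> C2on Om (fun y => phi (f y)).
Proof.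
  intros O HI Hphi [Cf Df]. split.
  - apply (C1on_comp Om I phi phi1); [exact O|exact HI| |exact Cf].
    intros y Hy. destruct (Hphi y Hy) as [A [B C]]. split; auto.
    apply (ex_derive_continuous (K:=R_AbsRing) (V:=R_NormedModule) phi1). eexists; exact B.
  - intro i. apply (C1on_ext Om (fun y => phi1 (f y) * pd i f y)). exact O.
    + intros y Hy. symmetry. apply (pd_comp i phi (phi1 (f y)) f y).
      apply (Hphi _ (HI y Hy)). apply (Cf y Hy).
    + apply C1on_mult; [exact O| |apply Df]. apply (C1on_comp Om I phi1 phi2); [exact O|exact HI| |exact Cf].
      intros y Hy. destruct (Hphi y Hy) as [A [B C]]. split; auto.
Qed.

Lemma C2on_mono (Om Om' : R3 -> Prop) f : (forall x, Om' x -> Om x) -> C2on Om f -> C2on Om' f.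
Proof. intros H [A B]. split. intros x Hx; apply A; auto. intros i x Hx; apply B; auto. Qed.

Lemma isC2_C2on f : isC2 f <-> C2on (fun _ => True) f.
Proof.
  unfold isC2, isC1, C2on, C1on. split.
  - intros [[A B] C]. split. intros x _; split; auto.
    intros i x _. destruct (C i) as [D E]. split; auto.
  - intros [A B]. split. split.
    + intro x; apply (proj1 (A x I)).
    + intros i x; apply (proj2 (A x I) i).
    + intro i. split.
      * intro x; apply (proj1 (B i x I)).
      * intros j x. apply (proj2 (B i x I) j).
Qed.

Lemma openT : openR3 (fun _ => True).
Proof. intros x _. apply filter_true. Qed.

Lemma locally_pos y : 0 < y -> locally y (fun z => 0 < z).
Proof.
  intro H. exists (mkposreal y H). intros z Hz. unfold ball in Hz; simpl in Hz.
  unfold AbsRing_ball, abs, minus, plus, opp in Hz; simpl in Hz.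
  apply Rabs_def2 in Hz. lra.
Qed.

Lemma rpow_pos a b : 0 < a -> rpow a b = exp (b * ln a).
Proof. intro H. unfold rpow. destruct (Rlt_dec 0 a); [reflexivity|lra]. Qed.

Lemma rpow_deriv c y : 0 < y -> is_derive (fun z => rpow z c) y (c * rpow y (c - 1)).
Proof.
  intro H. apply (is_derive_ext_loc (fun z => exp (c * ln z))).
  { apply (filter_imp (fun z => 0 < z)). intros z Hz. symmetry; apply rpow_pos; auto.
    apply locally_pos; auto. }
  rewrite rpow_pos by auto.
  auto_derive. auto.
  replace ((c-1) * ln y) with (c * ln y + - ln y) by ring. rewrite exp_plus, exp_Ropp, exp_ln by auto.
  field. lra.
Qed.

Lemma cont_of_deriv (f : R -> R) y d : is_derive f y d -> continuous f y.
Proof. intro H. apply (ex_derive_continuous (K:=R_AbsRing) (V:=R_NormedModule) f). eexists; exact H. Qed.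

Lemma rpow_smooth b : forall y, 0 < y ->
  is_derive (fun z => rpow z b) y (b * rpow y (b - 1)) /\
  is_derive (fun z => b * rpow z (b - 1)) y (b * ((b - 1) * rpow y (b - 1 - 1))) /\
  continuous (fun z => b * ((b - 1) * rpow z (b - 1 - 1))) y.
Proof.
  intros y H. split; [|split].
  - apply rpow_deriv; auto.
  - apply (is_derive_scal (fun z => rpow z (b-1))). apply rpow_deriv; auto.
  - eapply cont_of_deriv. apply (is_derive_scal (fun z => (b - 1) * rpow z (b-1-1))).
    apply (is_derive_scal (fun z => rpow z (b-1-1))). apply rpow_deriv; auto.
Qed.

Lemma sqrt_smooth : forall y, 0 < y ->
  is_derive sqrt y (/ (2 * sqrt y)) /\
  is_derive (fun z => / (2 * sqrt z)) y (- / (4 * y * sqrt y)) /\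
  continuous (fun z => - / (4 * z * sqrt z)) y.
Proof.
  intros y H. assert (S : 0 < sqrt y) by (apply sqrt_lt_R0; auto).
  split; [|split].
  - auto_derive; auto. field. lra.
  - auto_derive. split; auto. lra.
    assert (E : sqrt y * sqrt y = y) by (apply sqrt_sqrt; lra).
    replace (4 * y * sqrt y) with (4 * (sqrt y * sqrt y) * sqrt y) by (rewrite E; ring). field. lra.
  - eapply cont_of_deriv. auto_derive.
    + split; [lra|split; auto]. apply Rgt_not_eq. apply Rmult_lt_0_compat; lra.
    + reflexivity.
Qed.

Lemma inv_smooth : forall y, 0 < y ->
  is_derive (fun z => / z) y (- / (y * y)) /\
  is_derive (fun z => - / (z * z)) y (2 / (y * y * y)) /\
  continuous (fun z => 2 / (z * z * z)) y.
Proof.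
  intros y H. split; [|split].
  - auto_derive. lra. field. lra.
  - auto_derive. apply Rgt_not_eq; nra. field. lra.
  - eapply cont_of_deriv. auto_derive.
    + apply Rgt_not_eq. apply Rmult_gt_0_compat; nra.
    + reflexivity.
Qed.

Definition Sq (y : R3) : R := coord A1 y * coord A1 y + coord A2 y * coord A2 y + coord A3 y * coord A3 y.
Definition rho (y : R3) : R := / sqrt (Sq y).
Definition ev (k : ax) (y : R3) : R := coord k y * rho y.
Definition Om0 (y : R3) : Prop := y <> origin.
Definition L1 (y : R3) : R := Rabs (coord A1 y) + Rabs (coord A2 y) + Rabs (coord A3 y).

Lemma vnorm_Sq y : vnorm y = sqrt (Sq y).
Proof. unfold vnorm, Sq, coord. f_equal. ring. Qed.

Lemma Sq_nonneg y : 0 <= Sq y.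
Proof. unfold Sq. nra. Qed.

Lemma Sq_pos y : y <> origin -> 0 < Sq y.
Proof.
  intro H. destruct (Rlt_or_le 0 (Sq y)) as [h|h]; auto. exfalso. apply H.
  unfold Sq in h. apply R3_ext; unfold origin, x1, x2, x3 in *; simpl; unfold coord, x1, x2, x3 in h; nra.
Qed.

Lemma coord_le_norm k y : Rabs (coord k y) <= sqrt (Sq y).
Proof.
  rewrite <- sqrt_Rsqr_abs. apply sqrt_le_1_alt. unfold Rsqr, Sq.
  destruct k; simpl; nra.
Qed.

Lemma L1_nonneg y : 0 <= L1 y.
Proof. unfold L1. pose proof (Rabs_pos (coord A1 y)). pose proof (Rabs_pos (coord A2 y)). pose proof (Rabs_pos (coord A3 y)). lra. Qed.

Lemma norm_le_L1 y : sqrt (Sq y) <= L1 y.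
Proof.
  rewrite <- (sqrt_Rsqr (L1 y)) by apply L1_nonneg. apply sqrt_le_1_alt.
  unfold Rsqr, Sq, L1.
  pose proof (Rabs_pos (coord A1 y)). pose proof (Rabs_pos (coord A2 y)). pose proof (Rabs_pos (coord A3 y)).
  assert (Z : forall z, z * z = Rabs z * Rabs z) by (intro z; rewrite <- Rabs_mult; rewrite Rabs_right; nra).
  rewrite (Z (coord A1 y)), (Z (coord A2 y)), (Z (coord A3 y)). nra.
Qed.

Lemma L1_le_2norm y : L1 y <= 2 * sqrt (Sq y).
Proof.
  assert (Z : forall z, z * z = Rabs z * Rabs z) by (intro z; rewrite <- Rabs_mult; rewrite Rabs_right; nra).
  pose proof (sqrt_sqrt (Sq y) (Sq_nonneg y)) as E. pose proof (sqrt_pos (Sq y)).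
  pose proof (L1_nonneg y).
  assert (E2 : Sq y = Rabs (coord A1 y) * Rabs (coord A1 y) + Rabs (coord A2 y) * Rabs (coord A2 y) + Rabs (coord A3 y) * Rabs (coord A3 y))
    by (unfold Sq; rewrite <- !Z; ring).
  rewrite E2 in E at 3.
  unfold L1 in *.
  set (a := Rabs (coord A1 y)) in *. set (b := Rabs (coord A2 y)) in *. set (c := Rabs (coord A3 y)) in *.
  set (r := sqrt (Sq y)) in *.
  assert (Q : (a + b + c) * (a + b + c) <= (2 * r) * (2 * r)).
  { pose proof (Rle_0_sqr (a - b)). pose proof (Rle_0_sqr (b - c)). pose proof (Rle_0_sqr (a - c)).
    unfold Rsqr in *. nra. }
  pose proof (Rabs_pos (coord A1 y)). pose proof (Rabs_pos (coord A2 y)). pose proof (Rabs_pos (coord A3 y)).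
  nra.
Qed.

Lemma locally_R3_intro (x : R3) (P : R3 -> Prop) :
  (exists d, 0 < d /\ forall y, Rabs (x1 y - x1 x) < d -> Rabs (x2 y - x2 x) < d -> Rabs (x3 y - x3 x) < d -> P y) ->
  locally x P.
Proof.
  intros [d [Hd H]]. exists (mkposreal d Hd). destruct x as [[a b] c].
  intros [[u v] w] [[B1 B2] B3]. apply H; assumption.
Qed.

Lemma openOm0 : openR3 Om0.
Proof.
  intros x Hx. pose proof (Sq_pos x Hx) as P. unfold Sq in P.
  assert (exists m, coord m x <> 0) as [m Hm].
  { destruct (Req_dec (coord A1 x) 0); [|exists A1; auto].
    destruct (Req_dec (coord A2 x) 0); [|exists A2; auto].
    destruct (Req_dec (coord A3 x) 0); [|exists A3; auto].
    exfalso. rewrite H, H0, H1 in P. lra. }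
  apply locally_R3_intro. exists (Rabs (coord m x)). split. apply Rabs_pos_lt; auto.
  intros y B1 B2 B3 E. subst y. unfold origin, x1, x2, x3 in *; simpl in *.
  destruct m; simpl in *; unfold x1,x2,x3 in *; rewrite Rminus_0_l, Rabs_Ropp in *; lra.
Qed.

Lemma C2on_Sq Om : C2on Om Sq.
Proof.
  apply (C2on_mono (fun _ => True)); auto. unfold Sq.
  repeat apply C2on_plus; try apply openT; apply C2on_mult; try apply openT; apply C2on_coord.
Qed.

Lemma C2on_rho : C2on Om0 rho.
Proof.
  unfold rho. apply (C2on_comp Om0 (fun z => 0 < z) (fun z => / z) (fun z => - / (z * z)) (fun z => 2 / (z * z * z))
    (fun y => sqrt (Sq y))).
  - apply openOm0.
  - intros x Hx. apply sqrt_lt_R0. apply Sq_pos; auto.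
  - apply inv_smooth.
  - apply (C2on_comp Om0 (fun z => 0 < z) sqrt (fun z => / (2 * sqrt z)) (fun z => - / (4 * z * sqrt z)) Sq).
    + apply openOm0.
    + intros x Hx. apply Sq_pos; auto.
    + apply sqrt_smooth.
    + apply C2on_Sq.
Qed.

Lemma C2on_ev k : C2on Om0 (ev k).
Proof. unfold ev. apply C2on_mult. apply openOm0. apply C2on_coord. apply C2on_rho. Qed.

Definition rho1 (i : ax) (y : R3) : R := (-1 * coord i y) * (rho y * (rho y * rho y)).

Lemma Sq_shift i x t : Sq (shift i x t) =
  (coord A1 x + t * dl i A1) * (coord A1 x + t * dl i A1) +
  (coord A2 x + t * dl i A2) * (coord A2 x + t * dl i A2) +
  (coord A3 x + t * dl i A3) * (coord A3 x + t * dl i A3).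
Proof. unfold Sq. rewrite !coord_shift. reflexivity. Qed.

Lemma pd_Sq i x : ex_pd i Sq x /\ pd i Sq x = 2 * coord i x.
Proof.
  unfold ex_pd, pd. split.
  - eapply ex_derive_ext. intro t; symmetry; apply Sq_shift. auto_derive; auto.
  - rewrite (Derive_ext _ _ _ (Sq_shift i x)). apply is_derive_unique. auto_derive; auto.
    destruct i; simpl; ring.
Qed.

Lemma rho_pos x : x <> origin -> 0 < rho x.
Proof. intro H. unfold rho. apply Rinv_0_lt_compat, sqrt_lt_R0, Sq_pos; auto. Qed.

Lemma coord_rho k x : x <> origin -> Rabs (coord k x) * rho x <= 1.
Proof.
  intro H. unfold rho. pose proof (sqrt_lt_R0 _ (Sq_pos x H)).
  pose proof (coord_le_norm k x).
  apply (Rmult_le_reg_r (sqrt (Sq x))); auto. rewrite Rmult_assoc, Rinv_l by lra. lra.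
Qed.

Lemma pd_rho i x : x <> origin -> ex_pd i rho x /\ pd i rho x = rho1 i x.
Proof.
  intro H. pose proof (Sq_pos x H) as P. pose proof (sqrt_lt_R0 _ P) as SP.
  destruct (pd_Sq i x) as [E1 E2].
  destruct (sqrt_smooth (Sq x) P) as [D1 _].
  destruct (pd_comp i sqrt _ Sq x D1 E1) as [F1 F2].
  destruct (inv_smooth (sqrt (Sq x)) SP) as [G1 _].
  destruct (pd_comp i (fun z => / z) _ (fun y => sqrt (Sq y)) x G1 F1) as [H1 H2].
  unfold rho. split; auto. rewrite H2, F2, E2. unfold rho1, rho. field. lra.
Qed.

Lemma dl_bound i k : Rabs (dl i k) <= 1.
Proof. destruct i, k; simpl; rewrite ?Rabs_R0, ?Rabs_R1; lra. Qed.

Lemma abs_mult_le a b A B : Rabs a <= A -> Rabs b <= B -> Rabs (a * b) <= A * B.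
Proof. intros H1 H2. rewrite Rabs_mult. apply Rmult_le_compat; auto; apply Rabs_pos. Qed.

Lemma pd_rho1 j i x : x <> origin -> ex_pd j (rho1 i) x /\
  pd j (rho1 i) x = (-1 * dl j i) * (rho x * (rho x * rho x)) + (-1 * coord i x) * (3 * (rho x * rho x) * rho1 j x).
Proof.
  intro H. destruct (pd_rho j x H) as [R1 R2].
  destruct (pd_coord j i x) as [C1 C2]. destruct (pd_const j (-1) x) as [K1 K2].
  destruct (pd_mult j (fun _ => -1) (coord i) x K1 C1) as [M1 M2].
  destruct (pd_mult j rho rho x R1 R1) as [N1 N2].
  destruct (pd_mult j rho (fun y => rho y * rho y) x R1 N1) as [P1 P2].
  destruct (pd_mult j (fun y => -1 * coord i y) (fun y => rho y * (rho y * rho y)) x M1 P1) as [Q1 Q2].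
  change (rho1 i) with (fun y => (-1 * coord i y) * (rho y * (rho y * rho y))).
  split; auto. rewrite Q2, P2, N2, M2, K2, C2, R2. unfold rho1. ring.
Qed.

Lemma rho1_bound i x : x <> origin -> Rabs (rho1 i x) <= rho x * rho x.
Proof.
  intro H. pose proof (rho_pos x H). pose proof (coord_rho i x H). unfold rho1.
  replace ((-1 * coord i x) * (rho x * (rho x * rho x))) with (-(coord i x * rho x) * (rho x * rho x)) by ring.
  rewrite Rabs_mult, Rabs_Ropp, Rabs_mult, (Rabs_right (rho x)) by lra.
  rewrite (Rabs_right (rho x * rho x)) by nra. nra.
Qed.

Lemma pd_rho1_bound j i x : x <> origin -> Rabs (pd j (rho1 i) x) <= 4 * (rho x * (rho x * rho x)).
Proof.
  intro H. destruct (pd_rho1 j i x H) as [_ E]. rewrite E.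
  pose proof (rho_pos x H). pose proof (coord_rho i x H). pose proof (coord_rho j x H).
  pose proof (dl_bound j i).
  unfold rho1.
  replace ((-1 * dl j i) * (rho x * (rho x * rho x)) + (-1 * coord i x) * (3 * (rho x * rho x) * ((-1 * coord j x) * (rho x * (rho x * rho x)))))
    with (- (dl j i * (rho x * (rho x * rho x))) + 3 * ((coord i x * rho x) * (coord j x * rho x)) * (rho x * (rho x * rho x))) by ring.
  eapply Rle_trans. apply Rabs_triang. rewrite Rabs_Ropp.
  assert (A1' : Rabs (dl j i * (rho x * (rho x * rho x))) <= 1 * (rho x * (rho x * rho x))).
  { apply abs_mult_le; auto. rewrite Rabs_right; nra. }
  assert (A2' : Rabs (3 * ((coord i x * rho x) * (coord j x * rho x)) * (rho x * (rho x * rho x))) <= (3 * (1 * 1)) * (rho x * (rho x * rho x))).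
  { apply abs_mult_le. apply abs_mult_le. rewrite Rabs_right; lra.
    apply abs_mult_le; rewrite Rabs_mult, (Rabs_right (rho x)); lra.
    rewrite Rabs_right; nra. }
  lra.
Qed.

Lemma ev_bound k x : x <> origin -> Rabs (ev k x) <= 1.
Proof. intro H. pose proof (rho_pos x H). unfold ev. rewrite Rabs_mult, (Rabs_right (rho x)) by lra. apply coord_rho; auto. Qed.

Lemma pd_ev i k x : x <> origin -> ex_pd i (ev k) x /\ pd i (ev k) x = dl i k * rho x + coord k x * rho1 i x.
Proof.
  intro H. destruct (pd_rho i x H) as [R1 R2]. destruct (pd_coord i k x) as [C1 C2].
  destruct (pd_mult i (coord k) rho x C1 R1) as [M1 M2]. unfold ev. split; auto.
  rewrite M2, C2, R2. ring.
Qed.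

Lemma pd_ev_bound i k x : x <> origin -> Rabs (pd i (ev k) x) <= 2 * rho x.
Proof.
  intro H. destruct (pd_ev i k x H) as [_ E]. rewrite E.
  pose proof (rho_pos x H). pose proof (coord_rho k x H). pose proof (dl_bound i k).
  pose proof (rho1_bound i x H).
  eapply Rle_trans. apply Rabs_triang.
  assert (B1 : Rabs (dl i k * rho x) <= 1 * rho x) by (apply abs_mult_le; auto; rewrite Rabs_right; lra).
  assert (B2 : Rabs (coord k x * rho1 i x) <= rho x).
  { rewrite Rabs_mult. apply (Rle_trans _ (Rabs (coord k x) * (rho x * rho x))).
    apply Rmult_le_compat_l; auto. apply Rabs_pos. nra. }
  lra.
Qed.

Lemma pd_pd_ev j i k x : x <> origin -> ex_pd j (pd i (ev k)) x /\
  pd j (pd i (ev k)) x = dl i k * rho1 j x + (dl j k * rho1 i x + coord k x * pd j (rho1 i) x).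
Proof.
  intro H.
  assert (L : locally x (fun y => (fun y => dl i k * rho y + coord k y * rho1 i y) y = pd i (ev k) y)).
  { apply (loc_eq Om0); auto. apply openOm0. intros y Hy. symmetry. apply (pd_ev i k y Hy). }
  destruct (pd_ext_loc j _ _ x L) as [E1 E2].
  destruct (pd_rho j x H) as [R1 R2]. destruct (pd_coord j k x) as [C1 C2].
  destruct (pd_rho1 j i x H) as [S1 S2]. destruct (pd_const j (dl i k) x) as [K1 K2].
  destruct (pd_mult j (fun _ => dl i k) rho x K1 R1) as [M1 M2].
  destruct (pd_mult j (coord k) (rho1 i) x C1 S1) as [N1 N2].
  destruct (pd_plus j (fun y => dl i k * rho y) (fun y => coord k y * rho1 i y) x M1 N1) as [P1 P2].
  split. apply E2; auto. rewrite <- E1, P2, M2, N2, K2, C2, R2. ring.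
Qed.

Lemma pd_pd_ev_bound j i k x : x <> origin -> Rabs (pd j (pd i (ev k)) x) <= 6 * (rho x * rho x).
Proof.
  intro H. destruct (pd_pd_ev j i k x H) as [_ E]. rewrite E.
  pose proof (rho_pos x H). pose proof (coord_rho k x H). pose proof (dl_bound i k). pose proof (dl_bound j k).
  pose proof (rho1_bound i x H). pose proof (rho1_bound j x H). pose proof (pd_rho1_bound j i x H).
  assert (B1 : Rabs (dl i k * rho1 j x) <= 1 * (rho x * rho x)) by (apply abs_mult_le; auto).
  assert (B2 : Rabs (dl j k * rho1 i x) <= 1 * (rho x * rho x)) by (apply abs_mult_le; auto).
  assert (B3 : Rabs (coord k x * pd j (rho1 i) x) <= 4 * (rho x * rho x)).
  { rewrite Rabs_mult. apply (Rle_trans _ (Rabs (coord k x) * (4 * (rho x * (rho x * rho x))))).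
    apply Rmult_le_compat_l; auto. apply Rabs_pos. nra. }
  pose proof (Rabs_triang (dl i k * rho1 j x) (dl j k * rho1 i x + coord k x * pd j (rho1 i) x)).
  pose proof (Rabs_triang (dl j k * rho1 i x) (coord k x * pd j (rho1 i) x)).
  lra.
Qed.

Lemma lim0 (f : R3 -> R) : filterlim f (locally' origin) (locally 0) ->
  forall eps, 0 < eps -> exists d, 0 < d /\ forall y, y <> origin -> L1 y < d -> Rabs (f y) < eps.
Proof.
  intros H eps He. pose proof (proj1 (filterlim_locally _ _) H (mkposreal eps He)) as H1.
  destruct H1 as [d Hd]. exists d. split. apply cond_pos.
  intros y Hy HL. specialize (Hd y). 
  assert (B : ball origin d y).
  { destruct y as [[a b] c]. unfold L1, coord, x1, x2, x3 in HL; simpl in HL.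
    pose proof (Rabs_pos a). pose proof (Rabs_pos b). pose proof (Rabs_pos c).
    split; [split|]; unfold ball; simpl; unfold AbsRing_ball, abs, minus, plus, opp; simpl;
    rewrite Ropp_0, Rplus_0_r; lra. }
  specialize (Hd B Hy). unfold ball in Hd; simpl in Hd. unfold AbsRing_ball, abs, minus, plus, opp in Hd; simpl in Hd.
  rewrite Ropp_0, Rplus_0_r in Hd. exact Hd.
Qed.

Lemma R3_eq_dec (y : R3) : y = origin \/ y <> origin.
Proof. destruct (Req_dec (x1 y) 0), (Req_dec (x2 y) 0), (Req_dec (x3 y) 0);
  try (right; intro E; subst y; unfold origin, x1, x2, x3 in *; simpl in *; lra).
  left. apply R3_ext; auto.
Qed.

Lemma cont_origin (f : R3 -> R) :
  (forall eps, 0 < eps -> exists d, 0 < d /\ forall y, y <> origin -> L1 y < d -> Rabs (f y) <= eps) ->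
  f origin = 0 -> continuous f origin.
Proof.
  intros H H0. apply cont_R3_iff. intros eps He.
  destruct (H (eps/2)) as [d [Hd Hy]]. lra.
  exists (d/3). split. lra. intros y B1 B2 B3.
  rewrite H0, Rminus_0_r.
  destruct (R3_eq_dec y) as [E|E].
  - subst y. rewrite H0, Rabs_R0. exact He.
  - assert (L1 y < d).
    { change (x1 origin) with 0 in B1. change (x2 origin) with 0 in B2. change (x3 origin) with 0 in B3.
      rewrite !Rminus_0_r in B1, B2, B3. unfold L1, coord. lra. }
    specialize (Hy y E H1). lra.
Qed.

Lemma deriv0 (g : R -> R) :
  (forall eps, 0 < eps -> exists d, 0 < d /\ forall t, t <> 0 -> Rabs t < d -> Rabs (g t - g 0) <= eps * Rabs t) ->
  is_derive g 0 0.
Proof.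
  intro H. apply is_derive_Reals. intros eps He.
  destruct (H (eps/2)) as [d [Hd Ht]]. lra.
  exists (mkposreal d Hd). intros t Hn Hl. simpl in Hl.
  rewrite Rplus_0_l, Rminus_0_r. specialize (Ht t Hn Hl).
  pose proof (Rabs_pos_lt t Hn).
  unfold Rdiv. rewrite Rabs_mult, Rabs_inv.
  apply (Rmult_lt_reg_r (Rabs t)); auto. rewrite Rmult_assoc, Rinv_l by lra. nra.
Qed.

Lemma mvt_bound (g : R -> R) (a K : R) :
  (forall t, Rmin 0 a <= t <= Rmax 0 a -> continuous g t) ->
  (forall t, Rmin 0 a < t < Rmax 0 a -> ex_derive g t /\ Rabs (Derive g t) <= K) ->
  Rabs (g a - g 0) <= K * Rabs a.
Proof.
  intros C D.
  destruct (Req_dec a 0) as [Ha|Ha].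
  { subst a. rewrite Rminus_diag, Rabs_R0. lra. }
  assert (K0 : 0 <= K).
  { destruct (D (a/2)) as [_ B]. unfold Rmin, Rmax; destruct (Rle_dec 0 a); lra.
    pose proof (Rabs_pos (Derive g (a/2))). lra. }
  set (df := fun t => if Rlt_dec (Rmin 0 a) t then if Rlt_dec t (Rmax 0 a) then Derive g t else 0 else 0).
  destruct (MVT_gen g 0 a df) as [c [Hc E]].
  - intros t Ht. unfold df. destruct (Rlt_dec (Rmin 0 a) t); [|lra]. destruct (Rlt_dec t (Rmax 0 a)); [|lra].
    apply Derive_correct. apply D; auto.
  - intros t Ht. apply continuity_pt_filterlim. apply C; auto.
  - rewrite E, Rminus_0_r, Rabs_mult. apply Rmult_le_compat_r. apply Rabs_pos.
    unfold df. destruct (Rlt_dec (Rmin 0 a) c); [|rewrite Rabs_R0; lra].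
    destruct (Rlt_dec c (Rmax 0 a)); [|rewrite Rabs_R0; lra]. apply D; auto.
Qed.

Lemma seg_step (F : R3 -> R) i p a K :
  (forall y, continuous F y) ->
  (forall t, Rmin 0 a < t < Rmax 0 a -> ex_pd i F (shift i p t) /\ Rabs (pd i F (shift i p t)) <= K) ->
  Rabs (F (shift i p a) - F (shift i p 0)) <= K * Rabs a.
Proof.
  intros C D. apply (mvt_bound (fun t => F (shift i p t))).
  - intros t _. apply (continuous_comp (fun s => shift i p s) F). apply cont_shift. apply C.
  - intros t Ht. destruct (D t Ht) as [E B].
    pose proof (line_deriv i F p t E) as L. split. eexists; exact L.
    replace (Derive (fun t0 : R => F (shift i p t0)) t) with (pd i F (shift i p t)). exact B. symmetry. apply is_derive_unique. exact L.
Qed.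

Lemma between_nz a t : Rmin 0 a < t < Rmax 0 a -> t <> 0 /\ Rabs t <= Rabs a.
Proof. unfold Rmin, Rmax. destruct (Rle_dec 0 a); intros; split; try lra;
  unfold Rabs; destruct (Rcase_abs t), (Rcase_abs a); lra. Qed.

Lemma seg_bound (F : R3 -> R) x K :
  (forall y, continuous F y) ->
  (forall j y, y <> origin -> Rabs (coord A1 y) <= Rabs (coord A1 x) ->
     Rabs (coord A2 y) <= Rabs (coord A2 x) -> Rabs (coord A3 y) <= Rabs (coord A3 x) ->
     ex_pd j F y /\ Rabs (pd j F y) <= K) ->
  Rabs (F x - F origin) <= K * L1 x.
Proof.
  intros C D.
  set (p3 := (x1 x, x2 x, 0) : R3). set (p2 := (x1 x, 0, 0) : R3).
  assert (E3 : shift A3 p3 (coord A3 x) = x) by (apply R3_coord_ext; intro m; rewrite coord_shift; destruct m; unfold p3, p2, origin, coord, dl, x1, x2, x3; simpl; ring).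
  assert (E30 : shift A3 p3 0 = shift A2 p2 (coord A2 x)) by (apply R3_coord_ext; intro m; rewrite !coord_shift; destruct m; unfold p3, p2, origin, coord, dl, x1, x2, x3; simpl; ring).
  assert (E20 : shift A2 p2 0 = shift A1 origin (coord A1 x)) by (apply R3_coord_ext; intro m; rewrite !coord_shift; destruct m; unfold p3, p2, origin, coord, dl, x1, x2, x3; simpl; ring).
  assert (E10 : shift A1 origin 0 = origin) by apply shift0.
  assert (S3 := seg_step F A3 p3 (coord A3 x) K C).
  assert (S2 := seg_step F A2 p2 (coord A2 x) K C).
  assert (S1 := seg_step F A1 origin (coord A1 x) K C).
  rewrite E3, E30 in S3. rewrite E20 in S2. rewrite E10 in S1.
  assert (T3 : Rabs (F x - F (shift A2 p2 (coord A2 x))) <= K * Rabs (coord A3 x)).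
  { apply S3. intros t Ht. destruct (between_nz _ _ Ht) as [N B]. apply D.
    - intro Z. apply N. apply (f_equal (coord A3)) in Z. rewrite coord_shift in Z. unfold p3, p2, origin, coord, dl, x1, x2, x3 in Z; simpl in Z. lra.
    - rewrite coord_shift; unfold p3, p2, origin, coord, dl, x1, x2, x3 in *; simpl in *; rewrite ?Rmult_0_r, ?Rplus_0_r, ?Rmult_1_r, ?Rplus_0_l, ?Rabs_R0; try lra; apply Rabs_pos.
    - rewrite coord_shift; unfold p3, p2, origin, coord, dl, x1, x2, x3 in *; simpl in *; rewrite ?Rmult_0_r, ?Rplus_0_r, ?Rmult_1_r, ?Rplus_0_l, ?Rabs_R0; try lra; apply Rabs_pos.
    - rewrite coord_shift; unfold p3, p2, origin, coord, dl, x1, x2, x3 in *; simpl in *; rewrite ?Rmult_0_r, ?Rplus_0_r, ?Rmult_1_r, ?Rplus_0_l, ?Rabs_R0; try lra; apply Rabs_pos. }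
  assert (T2 : Rabs (F (shift A2 p2 (coord A2 x)) - F (shift A1 origin (coord A1 x))) <= K * Rabs (coord A2 x)).
  { apply S2. intros t Ht. destruct (between_nz _ _ Ht) as [N B]. apply D.
    - intro Z. apply N. apply (f_equal (coord A2)) in Z. rewrite coord_shift in Z. unfold p3, p2, origin, coord, dl, x1, x2, x3 in Z; simpl in Z. lra.
    - rewrite coord_shift; unfold p3, p2, origin, coord, dl, x1, x2, x3 in *; simpl in *; rewrite ?Rmult_0_r, ?Rplus_0_r, ?Rmult_1_r, ?Rplus_0_l, ?Rabs_R0; try lra; apply Rabs_pos.
    - rewrite coord_shift; unfold p3, p2, origin, coord, dl, x1, x2, x3 in *; simpl in *; rewrite ?Rmult_0_r, ?Rplus_0_r, ?Rmult_1_r, ?Rplus_0_l, ?Rabs_R0; try lra; apply Rabs_pos.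
    - rewrite coord_shift; unfold p3, p2, origin, coord, dl, x1, x2, x3 in *; simpl in *; rewrite ?Rmult_0_r, ?Rplus_0_r, ?Rmult_1_r, ?Rplus_0_l, ?Rabs_R0; try lra; apply Rabs_pos. }
  assert (T1 : Rabs (F (shift A1 origin (coord A1 x)) - F origin) <= K * Rabs (coord A1 x)).
  { apply S1. intros t Ht. destruct (between_nz _ _ Ht) as [N B]. apply D.
    - intro Z. apply N. apply (f_equal (coord A1)) in Z. rewrite coord_shift in Z. unfold p3, p2, origin, coord, dl, x1, x2, x3 in Z; simpl in Z. lra.
    - rewrite coord_shift; unfold p3, p2, origin, coord, dl, x1, x2, x3 in *; simpl in *; rewrite ?Rmult_0_r, ?Rplus_0_r, ?Rmult_1_r, ?Rplus_0_l, ?Rabs_R0; try lra; apply Rabs_pos.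
    - rewrite coord_shift; unfold p3, p2, origin, coord, dl, x1, x2, x3 in *; simpl in *; rewrite ?Rmult_0_r, ?Rplus_0_r, ?Rmult_1_r, ?Rplus_0_l, ?Rabs_R0; try lra; apply Rabs_pos.
    - rewrite coord_shift; unfold p3, p2, origin, coord, dl, x1, x2, x3 in *; simpl in *; rewrite ?Rmult_0_r, ?Rplus_0_r, ?Rmult_1_r, ?Rplus_0_l, ?Rabs_R0; try lra; apply Rabs_pos. }
  unfold L1.
  replace (F x - F origin) with ((F x - F (shift A2 p2 (coord A2 x))) + (F (shift A2 p2 (coord A2 x)) - F (shift A1 origin (coord A1 x))) + (F (shift A1 origin (coord A1 x)) - F origin)) by ring.
  eapply Rle_trans. apply Rabs_triang. eapply Rle_trans. apply Rplus_le_compat_r. apply Rabs_triang.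
  lra.
Qed.

Definition hgood (h : R3 -> R) : Prop :=
  C2on Om0 h /\ h origin = 0 /\ filterlim h (locally' origin) (locally 0) /\
  (forall i, filterlim (pd i h) (locally' origin) (locally 0)) /\
  (forall i j, filterlim (pd i (pd j h)) (locally' origin) (locally 0)).

Lemma ax_min (Q : ax -> R -> Prop) :
  (forall a d d', 0 < d' <= d -> Q a d -> Q a d') ->
  (forall a, exists d, 0 < d /\ Q a d) -> exists d, 0 < d /\ forall a, Q a d.
Proof.
  intros M H. destruct (H A1) as [d1 [P1 Q1]]. destruct (H A2) as [d2 [P2 Q2]]. destruct (H A3) as [d3 [P3 Q3]].
  exists (Rmin d1 (Rmin d2 d3)). split.
  - apply Rmin_glb_lt; auto. apply Rmin_glb_lt; auto.
  - pose proof (Rmin_l d1 (Rmin d2 d3)). pose proof (Rmin_r d1 (Rmin d2 d3)).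
    pose proof (Rmin_l d2 d3). pose proof (Rmin_r d2 d3).
    assert (0 < Rmin d1 (Rmin d2 d3)) by (apply Rmin_glb_lt; auto; apply Rmin_glb_lt; auto).
    intro a; destruct a; [apply (M A1 d1)|apply (M A2 d2)|apply (M A3 d3)]; auto; lra.
Qed.

Lemma L1_shift_origin i t : L1 (shift i origin t) = Rabs t.
Proof.
  unfold L1. rewrite !coord_shift. destruct i; unfold origin, coord, dl, x1, x2, x3; simpl;
  rewrite ?Rmult_0_r, ?Rmult_1_r, ?Rplus_0_l, ?Rabs_R0; ring.
Qed.

Lemma shift_origin_nz i t : t <> 0 -> shift i origin t <> origin.
Proof.
  intros H E. apply H. apply (f_equal (coord i)) in E. rewrite coord_shift in E.
  destruct i; unfold origin, coord, dl, x1, x2, x3 in E; simpl in E; lra.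
Qed.

Lemma box_L1 x y : Rabs (coord A1 y) <= Rabs (coord A1 x) ->
  Rabs (coord A2 y) <= Rabs (coord A2 x) -> Rabs (coord A3 y) <= Rabs (coord A3 x) -> L1 y <= L1 x.
Proof. unfold L1; lra. Qed.


Lemma hg_cont h : hgood h -> forall y, continuous h y.
Proof.
  intros [C [H0 [L0 [L1' L2]]]] y. destruct (R3_eq_dec y) as [E|E].
  - subst y. apply cont_origin; auto. intros eps He.
    destruct (lim0 h L0 eps He) as [d [Hd D]]. exists d; split; auto.
    intros y Hy HL. left. apply D; auto.
  - apply (proj1 C y E).
Qed.

Lemma hg_d1 h eps : hgood h -> 0 < eps -> exists d, 0 < d /\ forall i y, y <> origin -> L1 y < d -> Rabs (pd i h y) < eps.
Proof.
  intros [C [H0 [L0 [L1' L2]]]] He.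
  apply (ax_min (fun i d => forall y, y <> origin -> L1 y < d -> Rabs (pd i h y) < eps)).
  - intros a d d' Hd Q y Hy HL. apply Q; auto. lra.
  - intro a. apply (lim0 _ (L1' a) eps He).
Qed.

Lemma hg_d2 h eps : hgood h -> 0 < eps -> exists d, 0 < d /\ forall i j y, y <> origin -> L1 y < d -> Rabs (pd i (pd j h) y) < eps.
Proof.
  intros [C [H0 [L0 [L1' L2]]]] He.
  apply (ax_min (fun i d => forall j y, y <> origin -> L1 y < d -> Rabs (pd i (pd j h) y) < eps)).
  - intros a d d' Hd Q j y Hy HL. apply Q; auto. lra.
  - intro a.
    apply (ax_min (fun j d => forall y, y <> origin -> L1 y < d -> Rabs (pd a (pd j h) y) < eps)).
    + intros b d d' Hd Q y Hy HL. apply Q; auto. lra.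
    + intro b. apply (lim0 _ (L2 a b) eps He).
Qed.

Lemma hg_pd0 h i : hgood h -> ex_pd i h origin /\ pd i h origin = 0.
Proof.
  intro G. assert (G' := G). destruct G' as [C [H0 [L0 [L1' L2]]]].
  assert (D : is_derive (fun t => h (shift i origin t)) 0 0).
  { apply deriv0. intros eps He. destruct (hg_d1 h eps G He) as [d [Hd Q]].
    exists d. split; auto. intros t Ht Hl.
    rewrite shift0. rewrite <- (L1_shift_origin i t).
    apply seg_bound. apply hg_cont; auto.
    intros j y Hy B1 B2 B3. split. apply (proj2 (proj1 C y Hy) j).
    left. apply Q; auto. pose proof (box_L1 _ _ B1 B2 B3). rewrite L1_shift_origin in H. lra. }
  unfold ex_pd, pd. split. eexists; exact D. apply is_derive_unique; exact D.
Qed.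

Lemma hg_pd_cont h i : hgood h -> forall y, continuous (pd i h) y.
Proof.
  intros G y. assert (G' := G). destruct G' as [C [H0 [L0 [L1' L2]]]].
  destruct (R3_eq_dec y) as [E|E].
  - subst y. apply cont_origin. 2: apply hg_pd0; auto. intros eps He.
    destruct (lim0 _ (L1' i) eps He) as [d [Hd D]]. exists d; split; auto.
    intros y Hy HL. left. apply D; auto.
  - apply (proj2 (proj1 C y E) i).
Qed.

Lemma hg_bounds h eps : hgood h -> 0 < eps -> exists d, 0 < d /\ forall x, x <> origin -> L1 x < d ->
  Rabs (h x) <= eps * (L1 x * L1 x) /\ (forall i, Rabs (pd i h x) <= eps * L1 x) /\
  (forall i j, Rabs (pd i (pd j h) x) <= eps).
Proof.
  intros G He. assert (G' := G). destruct G' as [C [H0 [L0 [L1' L2]]]].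
  destruct (hg_d2 h eps G He) as [d [Hd Q]].
  assert (B1 : forall i x, L1 x < d -> Rabs (pd i h x) <= eps * L1 x).
  { intros i x Hx. replace (pd i h x) with (pd i h x - pd i h origin) by (rewrite (proj2 (hg_pd0 h i G)); ring).
    apply seg_bound. apply hg_pd_cont; auto.
    intros j y Hy Y1 Y2 Y3. split. apply (proj2 (proj2 C i y Hy) j).
    left. apply Q; auto. pose proof (box_L1 _ _ Y1 Y2 Y3). lra. }
  exists d. split; auto. intros x Hx HL. split; [|split].
  - replace (h x) with (h x - h origin) by (rewrite H0; ring).
    rewrite <- Rmult_assoc. apply seg_bound. apply hg_cont; auto.
    intros j y Hy Y1 Y2 Y3. split. apply (proj2 (proj1 C y Hy) j).
    pose proof (box_L1 _ _ Y1 Y2 Y3). pose proof (L1_nonneg y).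
    apply (Rle_trans _ (eps * L1 y)). apply B1; lra. apply Rmult_le_compat_l; lra.
  - intro i. apply B1; auto.
  - intros i j. left. apply Q; auto.
Qed.

Definition wv (h : R3 -> R) (k : ax) (y : R3) : R := h y * ev k y.

Lemma wv_C2on0 h k : hgood h -> C2on Om0 (wv h k).
Proof. intro G. unfold wv. apply C2on_mult. apply openOm0. apply G. apply C2on_ev. Qed.

Lemma pd_wv h k i y : hgood h -> y <> origin ->
  pd i (wv h k) y = pd i h y * ev k y + h y * pd i (ev k) y.
Proof.
  intros G Hy. unfold wv. apply (pd_mult i h (ev k) y).
  apply (proj2 (proj1 (proj1 G) y Hy) i). apply (proj2 (proj1 (C2on_ev k) y Hy) i).
Qed.

Lemma pd_pd_wv h k i j y : hgood h -> y <> origin ->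
  pd j (pd i (wv h k)) y = (pd j (pd i h) y * ev k y + pd i h y * pd j (ev k) y) +
     (pd j h y * pd i (ev k) y + h y * pd j (pd i (ev k)) y).
Proof.
  intros G Hy. 
  assert (L : locally y (fun z => (fun z => pd i h z * ev k z + h z * pd i (ev k) z) z = pd i (wv h k) z)).
  { apply (loc_eq Om0). apply openOm0. exact Hy. intros z Hz. symmetry. apply (pd_wv h k i z); auto. }
  destruct (pd_ext_loc j _ _ y L) as [E _]. rewrite <- E.
  destruct G as [[C1 C2] _]. destruct (C2on_ev k) as [E1 E2].
  assert (a1 := proj2 (C2 i y Hy) j). assert (a2 := proj2 (E1 y Hy) j).
  assert (a3 := proj2 (C1 y Hy) j). assert (a4 := proj2 (E2 i y Hy) j).
  assert (a5 := proj2 (C1 y Hy) i). assert (a6 := proj2 (E1 y Hy) i).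
  destruct (pd_mult j (pd i h) (ev k) y (proj1 a1) (proj1 a2)) as [M1 M2].
  destruct (pd_mult j h (pd i (ev k)) y (proj1 a3) (proj1 a4)) as [N1 N2].
  destruct (pd_plus j (fun z => pd i h z * ev k z) (fun z => h z * pd i (ev k) z) y M1 N1) as [P1 P2].
  rewrite P2, M2, N2. ring.
Qed.

Lemma L1_rho x : x <> origin -> L1 x * rho x <= 2.
Proof.
  intro H. pose proof (L1_le_2norm x). pose proof (sqrt_lt_R0 _ (Sq_pos x H)). unfold rho.
  apply (Rmult_le_reg_r (sqrt (Sq x))); auto. rewrite Rmult_assoc, Rinv_l by lra. lra.
Qed.

Lemma wv_bounds h k eps : hgood h -> 0 < eps -> exists d, 0 < d /\ forall x, x <> origin -> L1 x < d ->
  Rabs (wv h k x) <= eps * (L1 x * L1 x) /\ (forall i, Rabs (pd i (wv h k) x) <= 5 * eps * L1 x) /\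
  (forall i j, Rabs (pd j (pd i (wv h k)) x) <= 33 * eps).
Proof.
  intros G He. destruct (hg_bounds h eps G He) as [d [Hd B]].
  exists d. split; auto. intros x Hx HL. destruct (B x Hx HL) as [B0 [B1 B2]].
  pose proof (L1_rho x Hx) as LR. pose proof (rho_pos x Hx) as RP. pose proof (L1_nonneg x) as LN.
  set (L := L1 x) in *. set (r := rho x) in *.
  assert (EB := ev_bound k x Hx).
  split; [|split].
  - unfold wv. rewrite Rabs_mult. rewrite <- (Rmult_1_r (eps * (L * L))).
    apply Rmult_le_compat; auto; apply Rabs_pos.
  - intro i. rewrite (pd_wv h k i x G Hx).
    pose proof (pd_ev_bound i k x Hx).
    eapply Rle_trans. apply Rabs_triang. rewrite !Rabs_mult.
    assert (Rabs (pd i h x) * Rabs (ev k x) <= (eps * L) * 1) by (apply Rmult_le_compat; auto; apply Rabs_pos).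
    assert (Rabs (h x) * Rabs (pd i (ev k) x) <= (eps * (L * L)) * (2 * r)) by (apply Rmult_le_compat; auto; apply Rabs_pos).
    assert ((eps * (L * L)) * (2 * r) <= 4 * eps * L).
    { assert (0 <= (eps * L) * (2 - L * r)) by (apply Rmult_le_pos; nra). nra. }
    lra.
  - intros i j. rewrite (pd_pd_wv h k i j x G Hx).
    pose proof (pd_ev_bound i k x Hx). pose proof (pd_ev_bound j k x Hx). pose proof (pd_pd_ev_bound j i k x Hx).
    pose proof (B1 i). pose proof (B1 j). pose proof (B2 j i).
    eapply Rle_trans. apply Rabs_triang. eapply Rle_trans. apply Rplus_le_compat; apply Rabs_triang.
    rewrite !Rabs_mult.
    assert (Rabs (pd j (pd i h) x) * Rabs (ev k x) <= eps * 1) by (apply Rmult_le_compat; auto; apply Rabs_pos).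
    assert (Rabs (pd i h x) * Rabs (pd j (ev k) x) <= (eps * L) * (2 * r)) by (apply Rmult_le_compat; auto; apply Rabs_pos).
    assert (Rabs (pd j h x) * Rabs (pd i (ev k) x) <= (eps * L) * (2 * r)) by (apply Rmult_le_compat; auto; apply Rabs_pos).
    assert (Rabs (h x) * Rabs (pd j (pd i (ev k)) x) <= (eps * (L * L)) * (6 * (r * r))) by (apply Rmult_le_compat; auto; apply Rabs_pos).
    assert ((eps * L) * (2 * r) <= 4 * eps).
    { assert (0 <= eps * (2 - L * r)) by (apply Rmult_le_pos; nra). nra. }
    assert ((eps * (L * L)) * (6 * (r * r)) <= 24 * eps).
    { replace ((eps * (L * L)) * (6 * (r * r))) with (6 * eps * ((L * r) * (L * r))) by ring.
      assert (0 <= L * r) by nra. assert ((L * r) * (L * r) <= 4) by nra. nra. }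
    lra.
Qed.

Lemma wv_origin h k : hgood h -> wv h k origin = 0.
Proof. intros G. unfold wv. rewrite (proj1 (proj2 G)). ring. Qed.

Lemma small_sq t eps : Rabs t <= 1 -> 0 < eps -> eps * (Rabs t * Rabs t) <= eps * Rabs t.
Proof. intros. pose proof (Rabs_pos t). apply Rmult_le_compat_l; nra. Qed.

Lemma wv_pd0 h k i : hgood h -> ex_pd i (wv h k) origin /\ pd i (wv h k) origin = 0.
Proof.
  intro G.
  assert (D : is_derive (fun t => wv h k (shift i origin t)) 0 0).
  { apply deriv0. intros eps He. destruct (wv_bounds h k eps G He) as [d [Hd B]].
    exists (Rmin d 1). split. apply Rmin_glb_lt; lra.
    intros t Ht Hl. pose proof (Rmin_l d 1). pose proof (Rmin_r d 1).
    rewrite shift0, (wv_origin h k G), Rminus_0_r.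
    destruct (B (shift i origin t) (shift_origin_nz i t Ht)) as [B0 _]. rewrite L1_shift_origin; lra.
    rewrite L1_shift_origin in B0. eapply Rle_trans. exact B0. apply small_sq; auto. lra. }
  unfold ex_pd, pd. split. eexists; exact D. apply is_derive_unique; exact D.
Qed.

Lemma wv_pdpd0 h k i j : hgood h -> ex_pd j (pd i (wv h k)) origin /\ pd j (pd i (wv h k)) origin = 0.
Proof.
  intro G.
  assert (D : is_derive (fun t => pd i (wv h k) (shift j origin t)) 0 0).
  { apply deriv0. intros eps He. destruct (wv_bounds h k (eps/5) G) as [d [Hd B]]. lra.
    exists d. split. auto.
    intros t Ht Hl.
    rewrite shift0, (proj2 (wv_pd0 h k i G)), Rminus_0_r.
    destruct (B (shift j origin t) (shift_origin_nz j t Ht)) as [_ [B1 _]]. rewrite L1_shift_origin; lra.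
    specialize (B1 i). rewrite L1_shift_origin in B1. lra. }
  unfold ex_pd, pd. split. eexists; exact D. apply is_derive_unique; exact D.
Qed.

Lemma wv_cont0 h k : hgood h -> continuous (wv h k) origin.
Proof.
  intro G. apply cont_origin. 2: apply wv_origin; auto.
  intros eps He. destruct (wv_bounds h k eps G He) as [d [Hd B]].
  exists (Rmin d 1). split. apply Rmin_glb_lt; lra.
  intros y Hy HL. pose proof (Rmin_l d 1). pose proof (Rmin_r d 1). pose proof (L1_nonneg y).
  destruct (B y Hy) as [B0 _]. lra.
  eapply Rle_trans. exact B0. assert (L1 y * L1 y <= 1) by nra. nra.
Qed.

Lemma wv_pd_cont0 h k i : hgood h -> continuous (pd i (wv h k)) origin.
Proof.
  intro G. apply cont_origin. 2: apply wv_pd0; auto.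
  intros eps He. destruct (wv_bounds h k (eps/5) G) as [d [Hd B]]. lra.
  exists (Rmin d 1). split. apply Rmin_glb_lt; lra.
  intros y Hy HL. pose proof (Rmin_l d 1). pose proof (Rmin_r d 1). pose proof (L1_nonneg y).
  destruct (B y Hy) as [_ [B1 _]]. lra. specialize (B1 i).
  eapply Rle_trans. exact B1. nra.
Qed.

Lemma wv_pdpd_cont0 h k i j : hgood h -> continuous (pd j (pd i (wv h k))) origin.
Proof.
  intro G. apply cont_origin. 2: apply wv_pdpd0; auto.
  intros eps He. destruct (wv_bounds h k (eps/33) G) as [d [Hd B]]. lra.
  exists d. split. auto.
  intros y Hy HL. destruct (B y Hy HL) as [_ [_ B2]]. specialize (B2 i j). lra.
Qed.

Lemma wv_C2 h k : hgood h -> C2on (fun _ => True) (wv h k).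
Proof.
  intro G. destruct (wv_C2on0 h k G) as [W1 W2]. split.
  - intros x _. destruct (R3_eq_dec x) as [E|E].
    + subst x. split. apply wv_cont0; auto. intro i. split. apply wv_pd0; auto. apply wv_pd_cont0; auto.
    + apply W1; auto.
  - intros i x _. destruct (R3_eq_dec x) as [E|E].
    + subst x. split. apply wv_pd_cont0; auto. intro j. split. apply wv_pdpd0; auto. apply wv_pdpd_cont0; auto.
    + apply W2; auto.
Qed.

Lemma Sq_shift_origin a : Sq (shift A1 origin a) = a * a.
Proof. unfold Sq. rewrite !coord_shift. unfold origin, coord, dl, x1, x2, x3; simpl. ring. Qed.

Lemma radial_pd (G : R3 -> R) x j k : radial G -> (forall y i, y <> origin -> ex_pd i G y) -> x <> origin ->
  pd j G x * coord k x = pd k G x * coord j x.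
Proof.
  intros RG EG Hx.
  pose proof (Sq_pos x Hx) as SP. set (r0 := sqrt (Sq x)). assert (R0 : 0 < r0) by (apply sqrt_lt_R0; auto).
  set (p0 := shift A1 origin r0).
  assert (P0 : p0 <> origin).
  { intro E. apply (f_equal (coord A1)) in E. unfold p0 in E. rewrite coord_shift in E.
    unfold origin, coord, dl, x1 in E; simpl in E. lra. }
  set (Phi := fun rr => G (shift A1 origin (sqrt rr))).
  destruct (EG p0 A1 P0) as [g1 Dg].
  assert (DPhi : is_derive Phi (Sq x) (/ (2 * r0) * g1)).
  { apply (is_derive_ext (fun rr => (fun u => G (shift A1 p0 u)) (sqrt rr - r0))).
    { intro rr. unfold Phi, p0. cbv beta. rewrite shift_shift. f_equal. f_equal. ring. }
    assert (Hs : is_derive (fun rr => sqrt rr - r0) (Sq x) (/ (2 * r0))).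
    { unfold r0. auto_derive. auto. field. apply Rgt_not_eq. apply sqrt_lt_R0; auto. }
    assert (Dg' : is_derive (fun u => G (shift A1 p0 u)) (sqrt (Sq x) - r0) g1).
    { replace (sqrt (Sq x) - r0) with 0 by (unfold r0; ring). exact Dg. }
    pose proof (is_derive_comp (fun u => G (shift A1 p0 u)) (fun rr => sqrt rr - r0) (Sq x) g1 _ Dg' Hs) as C.
    eapply is_derive_ext; [|exact C]. intro t; reflexivity. }
  assert (KEY : forall m, pd m G x = (/ (2 * r0) * g1) * (2 * coord m x)).
  { intro m. unfold pd.
    assert (E : forall t, G (shift m x t) = Phi (Sq (shift m x t))).
    { intro t. unfold Phi. apply RG. rewrite !vnorm_Sq, Sq_shift_origin.
      rewrite sqrt_sqrt by apply Sq_nonneg. reflexivity. }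
    rewrite (Derive_ext _ _ _ E).
    destruct (pd_Sq m x) as [S1 S2]. unfold ex_pd, pd in S1, S2. apply Derive_correct in S1.
    assert (S1' : is_derive (fun t => Sq (shift m x t)) 0 (2 * coord m x)) by (rewrite <- S2; exact S1).
    assert (DP : is_derive Phi (Sq (shift m x 0)) (/ (2 * r0) * g1)) by (rewrite shift0; exact DPhi).
    pose proof (is_derive_comp Phi (fun t => Sq (shift m x t)) 0 _ _ DP S1') as C.
    transitivity (scal (2 * coord m x) (/ (2 * r0) * g1)).
    - apply is_derive_unique. eapply is_derive_ext; [|exact C]. intro t. reflexivity.
    - unfold scal; simpl; unfold mult; simpl; ring. }
  rewrite !KEY. ring.
Qed.

Definition tt (s q : R3 -> R) (x : R3) : R := period s q * sqrt (q x / s x).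
Definition Dd (s q : R3 -> R) (x : R3) : R := 2 * PI - period s q * sqrt (q x / s x).
Definition bb (p : R) : R := 1 / (p - 1).
Definition Yf (s q V : R3 -> R) (x : R3) : R :=
  s x * (2 * PI + tt s q x) * / (period s q * period s q) * / V x.
Definition Bf (s q V : R3 -> R) (p : R) (x : R3) : R := rpow (Yf s q V x) (bb p).
Definition hf (s q : R3 -> R) (p : R) (x : R3) : R := rpow (Rabs (Dd s q x)) (bb p).
Definition uf (s q V : R3 -> R) (p : R) (k : ax) (x : R3) : R := Bf s q V p x * wv (hf s q p) k x.
Definition Gf (s q V : R3 -> R) (p : R) (x : R3) : R := Bf s q V p x * hf s q p x * rho x.

Lemma period_pos s q : (forall x, 0 < s x) -> (forall x, 0 < q x) -> 0 < period s q.
Proof.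
  intros Hs Hq. unfold period. apply Rmult_lt_0_compat. pose proof PI_RGT_0. lra.
  apply sqrt_lt_R0. unfold Rdiv. apply Rmult_lt_0_compat; auto. apply Rinv_0_lt_compat; auto.
Qed.

Lemma Dd_origin s q : (forall x, 0 < s x) -> (forall x, 0 < q x) -> Dd s q origin = 0.
Proof.
  intros Hs Hq. unfold Dd, period. pose proof (Hs origin). pose proof (Hq origin).
  rewrite Rmult_assoc, <- sqrt_mult.
  replace (s origin / q origin * (q origin / s origin)) with 1 by (field; lra).
  rewrite sqrt_1. ring.
  unfold Rdiv; left; apply Rmult_lt_0_compat; auto; apply Rinv_0_lt_compat; auto.
  unfold Rdiv; left; apply Rmult_lt_0_compat; auto; apply Rinv_0_lt_compat; auto.
Qed.

Lemma tt_nonneg s q x : (forall x, 0 < s x) -> (forall x, 0 < q x) -> 0 <= tt s q x.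
Proof. intros Hs Hq. unfold tt. apply Rmult_le_pos. left; apply period_pos; auto. apply sqrt_pos. Qed.

Lemma Yf_pos s q V x : (forall x, 0 < s x) -> (forall x, 0 < q x) -> (forall x, 0 < V x) -> 0 < Yf s q V x.
Proof.
  intros Hs Hq HV. unfold Yf. pose proof (tt_nonneg s q x Hs Hq). pose proof PI_RGT_0.
  pose proof (period_pos s q Hs Hq).
  repeat apply Rmult_lt_0_compat; auto; try lra; apply Rinv_0_lt_compat; auto. nra.
Qed.

Lemma C2on_inv_comp Om f : openR3 Om -> (forall x, Om x -> 0 < f x) -> C2on Om f -> C2on Om (fun y => / f y).
Proof.
  intros O P C. apply (C2on_comp Om (fun z => 0 < z) (fun z => / z) (fun z => - / (z * z)) (fun z => 2 / (z * z * z)) f); auto.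
  apply inv_smooth.
Qed.

Lemma C2on_sqrt_comp Om f : openR3 Om -> (forall x, Om x -> 0 < f x) -> C2on Om f -> C2on Om (fun y => sqrt (f y)).
Proof.
  intros O P C. apply (C2on_comp Om (fun z => 0 < z) sqrt (fun z => / (2 * sqrt z)) (fun z => - / (4 * z * sqrt z)) f); auto.
  apply sqrt_smooth.
Qed.

Lemma C2on_rpow_comp Om f b : openR3 Om -> (forall x, Om x -> 0 < f x) -> C2on Om f -> C2on Om (fun y => rpow (f y) b).
Proof.
  intros O P C. apply (C2on_comp Om (fun z => 0 < z) (fun z => rpow z b) (fun z => b * rpow z (b - 1))
    (fun z => b * ((b - 1) * rpow z (b - 1 - 1))) f); auto.
  apply rpow_smooth.
Qed.

Lemma C2on_scal Om c f : openR3 Om -> C2on Om f -> C2on Om (fun y => c * f y).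
Proof. intros O C. apply (C2on_mult Om (fun _ => c) f O (C2on_const Om c) C). Qed.

Lemma C2_tt s q : (forall x, 0 < s x) -> (forall x, 0 < q x) -> isC2 s -> isC2 q -> C2on (fun _ => True) (tt s q).
Proof.
  intros Hs Hq Cs Cq. apply isC2_C2on in Cs. apply isC2_C2on in Cq. unfold tt.
  apply C2on_scal. apply openT. apply C2on_sqrt_comp. apply openT.
  intros x _. unfold Rdiv. apply Rmult_lt_0_compat; auto. apply Rinv_0_lt_compat; auto.
  unfold Rdiv. apply (C2on_mult _ q (fun y => / s y)). apply openT. auto.
  apply C2on_inv_comp; auto. apply openT.
Qed.

Lemma C2_Yf s q V : (forall x, 0 < s x) -> (forall x, 0 < q x) -> (forall x, 0 < V x) ->
  isC2 s -> isC2 q -> isC2 V -> C2on (fun _ => True) (Yf s q V).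
Proof.
  intros Hs Hq HV Cs Cq CV. pose proof (C2_tt s q Hs Hq Cs Cq) as Ct.
  apply isC2_C2on in Cs. apply isC2_C2on in Cq. apply isC2_C2on in CV. unfold Yf.
  apply (C2on_mult _ (fun y => s y * (2 * PI + tt s q y) * / (period s q * period s q)) (fun y => / V y)).
  apply openT. 2: apply C2on_inv_comp; auto; apply openT.
  apply (C2on_mult _ (fun y => s y * (2 * PI + tt s q y)) (fun _ => / (period s q * period s q))).
  apply openT. 2: apply C2on_const.
  apply (C2on_mult _ s (fun y => 2 * PI + tt s q y)). apply openT. auto.
  apply (C2on_plus _ (fun _ => 2 * PI) (tt s q)). apply openT. apply C2on_const. auto.
Qed.

Lemma C2_Bf s q V p : (forall x, 0 < s x) -> (forall x, 0 < q x) -> (forall x, 0 < V x) ->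
  isC2 s -> isC2 q -> isC2 V -> C2on (fun _ => True) (Bf s q V p).
Proof.
  intros. unfold Bf. apply C2on_rpow_comp. apply openT. intros; apply Yf_pos; auto. apply C2_Yf; auto.
Qed.

Lemma C2_Dd s q : (forall x, 0 < s x) -> (forall x, 0 < q x) -> isC2 s -> isC2 q -> C2on (fun _ => True) (Dd s q).
Proof.
  intros Hs Hq Cs Cq. apply (C2on_ext _ (fun y => 2 * PI + (-1) * tt s q y)). apply openT.
  intros x _. unfold Dd, tt. ring.
  apply (C2on_plus _ (fun _ => 2 * PI) (fun y => (-1) * tt s q y)). apply openT. apply C2on_const.
  apply C2on_scal. apply openT. apply C2_tt; auto.
Qed.

Lemma rpow_0 b : rpow 0 b = 0.
Proof. unfold rpow. destruct (Rlt_dec 0 0); [lra|reflexivity]. Qed.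

Lemma hf_sigma (s q : R3 -> R) (sigma : R) : (forall x, 0 < s x) -> (forall x, 0 < q x) ->
  (sigma = 1 \/ sigma = -1) -> (forall x, x <> origin -> 0 < sigma * Dd s q x) ->
  forall x, Rabs (Dd s q x) = sigma * Dd s q x.
Proof.
  intros Hs Hq Sg P x. destruct (R3_eq_dec x) as [E|E].
  - subst x. rewrite Dd_origin by auto. rewrite Rabs_R0. ring.
  - specialize (P x E). destruct Sg; subst sigma.
    + rewrite Rabs_right; lra.
    + rewrite Rabs_left; lra.
Qed.

Lemma hgood_hf s q p sigma : (forall x, 0 < s x) -> (forall x, 0 < q x) -> isC2 s -> isC2 q ->
  (sigma = 1 \/ sigma = -1) -> (forall x, x <> origin -> 0 < sigma * Dd s q x) ->
  C2_to_zero_at_origin (fun x => rpow (Rabs (2 * PI - period s q * sqrt (q x / s x))) (1 / (p - 1))) ->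
  hgood (hf s q p).
Proof.
  intros Hs Hq Cs Cq Sg P [L0 [L1' L2]]. split; [|split; [|split; [|split]]].
  - apply (C2on_ext Om0 (fun y => rpow (sigma * Dd s q y) (bb p))). apply openOm0.
    intros x _. unfold hf. rewrite (hf_sigma s q sigma Hs Hq Sg P x). reflexivity.
    apply C2on_rpow_comp. apply openOm0. auto.
    apply (C2on_mono (fun _ => True)); auto. apply C2on_scal. apply openT. apply C2_Dd; auto.
  - unfold hf. rewrite Dd_origin by auto. rewrite Rabs_R0. apply rpow_0.
  - exact L0.
  - exact L1'.
  - exact L2.
Qed.

Lemma C2_uf s q V p k : (forall x, 0 < s x) -> (forall x, 0 < q x) -> (forall x, 0 < V x) ->
  isC2 s -> isC2 q -> isC2 V -> hgood (hf s q p) -> isC2 (uf s q V p k).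
Proof.
  intros Hs Hq HV Cs Cq CV G. apply isC2_C2on. unfold uf.
  apply (C2on_mult _ (Bf s q V p) (wv (hf s q p) k)). apply openT. apply C2_Bf; auto. apply wv_C2; auto.
Qed.

Lemma uf_G s q V p k : uf s q V p k = fun y => Gf s q V p y * coord k y.
Proof. extensionality y. unfold uf, wv, ev, Gf. ring. Qed.

Lemma Gf_radial s q V p : radial s -> radial q -> radial V -> radial (Gf s q V p).
Proof.
  intros Rs Rq RV x y H. unfold Gf, Bf, Yf, tt, hf, Dd, rho. rewrite <- !vnorm_Sq.
  rewrite (Rs x y H), (Rq x y H), (RV x y H), H. reflexivity.
Qed.

Lemma Gf_C2on0 s q V p : (forall x, 0 < s x) -> (forall x, 0 < q x) -> (forall x, 0 < V x) ->
  isC2 s -> isC2 q -> isC2 V -> hgood (hf s q p) -> C2on Om0 (Gf s q V p).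
Proof.
  intros Hs Hq HV Cs Cq CV G. unfold Gf.
  apply (C2on_mult _ (fun y => Bf s q V p y * hf s q p y) rho). apply openOm0. 2: apply C2on_rho.
  apply (C2on_mult _ (Bf s q V p) (hf s q p)). apply openOm0. 2: apply G.
  apply (C2on_mono (fun _ => True)); auto. apply C2_Bf; auto.
Qed.

Lemma pd_cross0 (G : R3 -> R) j k : dl j k = 0 -> pd j (fun y => G y * coord k y) origin = 0.
Proof.
  intro H. unfold pd. rewrite (Derive_ext _ (fun _ => 0)). apply Derive_const.
  intro t. rewrite coord_shift, H. replace (coord k origin) with 0 by (destruct k; reflexivity). ring.
Qed.

Lemma curl_sym s q V p j k : (forall x, 0 < s x) -> (forall x, 0 < q x) -> (forall x, 0 < V x) ->
  radial s -> radial q -> radial V ->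
  isC2 s -> isC2 q -> isC2 V -> hgood (hf s q p) ->
  forall x, pd j (uf s q V p k) x = pd k (uf s q V p j) x.
Proof.
  intros Hs Hq HV Rs Rq RV Cs Cq CV G x. rewrite !uf_G.
  destruct (R3_eq_dec x) as [E|E].
  - subst x. destruct j, k; try reflexivity; rewrite !pd_cross0; reflexivity.
  - pose proof (Gf_C2on0 s q V p Hs Hq HV Cs Cq CV G) as [C1 _].
    assert (EG : forall y i, y <> origin -> ex_pd i (Gf s q V p) y) by (intros y i Hy; apply (proj2 (C1 y Hy) i)).
    rewrite (proj2 (pd_mult j _ (coord k) x (EG x j E) (proj1 (pd_coord j k x)))).
    rewrite (proj2 (pd_mult k _ (coord j) x (EG x k E) (proj1 (pd_coord k j x)))).
    rewrite (proj2 (pd_coord j k x)), (proj2 (pd_coord k j x)).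
    rewrite (radial_pd (Gf s q V p) x j k (Gf_radial s q V p Rs Rq RV) EG E).
    replace (dl k j) with (dl j k) by (destruct j, k; reflexivity). reflexivity.
Qed.

Lemma rpow_nonneg a b : 0 <= rpow a b.
Proof. unfold rpow. destruct (Rlt_dec 0 a). left; apply exp_pos. lra. Qed.

Lemma uf_sumsq s q V p x : (forall x, 0 < s x) -> (forall x, 0 < q x) -> hgood (hf s q p) ->
  uf s q V p A1 x * uf s q V p A1 x + uf s q V p A2 x * uf s q V p A2 x + uf s q V p A3 x * uf s q V p A3 x
  = (Bf s q V p x * hf s q p x) * (Bf s q V p x * hf s q p x).
Proof.
  intros Hs Hq G. unfold uf, wv, ev.
  destruct (R3_eq_dec x) as [E|E].
  - subst x. rewrite (proj1 (proj2 G)). ring.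
  - pose proof (Sq_pos x E). assert (R : rho x * rho x * Sq x = 1).
    { unfold rho. pose proof (sqrt_lt_R0 _ H). assert (E2 : sqrt (Sq x) * sqrt (Sq x) = Sq x) by (apply sqrt_sqrt; lra).
      set (r := sqrt (Sq x)) in *. rewrite <- E2. field. lra. }
    unfold Sq in R. 
    replace ((Bf s q V p x * hf s q p x) * (Bf s q V p x * hf s q p x)) with
      ((Bf s q V p x * hf s q p x) * (Bf s q V p x * hf s q p x) * 1) by ring.
    rewrite <- R. ring.
Qed.

Lemma c3norm_form (a b u1 u2 u3 : R) : a * a + b * b = 1 ->
  c3norm ((a * u1, b * u1), (a * u2, b * u2), (a * u3, b * u3)) = sqrt (u1 * u1 + u2 * u2 + u3 * u3).
Proof.
  intro H. unfold c3norm, comp, Cmod. simpl.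
  assert (Z : forall u, sqrt ((a * u) * ((a * u) * 1) + (b * u) * ((b * u) * 1)) * (sqrt ((a * u) * ((a * u) * 1) + (b * u) * ((b * u) * 1)) * 1) = u * u).
  { intro u. replace ((a * u) * ((a * u) * 1) + (b * u) * ((b * u) * 1)) with ((a * a + b * b) * (u * u)) by ring.
    rewrite H, Rmult_1_l, Rmult_1_r. apply sqrt_sqrt. nra. }
  rewrite !Z. reflexivity.
Qed.

Definition Fam (s q V : R3 -> R) (p a : R) (x : R3) : C3 :=
  ((cos (PI * a) * uf s q V p A1 x, sin (PI * a) * uf s q V p A1 x),
   (cos (PI * a) * uf s q V p A2 x, sin (PI * a) * uf s q V p A2 x),
   (cos (PI * a) * uf s q V p A3 x, sin (PI * a) * uf s q V p A3 x)).

Definition alp (w a t : R) : R := cos (w * t) * cos (PI * a) - sin (w * t) * sin (PI * a).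
Definition bet (w a t : R) : R := cos (w * t) * sin (PI * a) + sin (w * t) * cos (PI * a).

Lemma alp_bet w a t : alp w a t * alp w a t + bet w a t * bet w a t = 1.
Proof.
  unfold alp, bet. pose proof (sin2_cos2 (w * t)). pose proof (sin2_cos2 (PI * a)). unfold Rsqr in *. nra.
Qed.

Lemma pair_eq (a b c d : R) : a = c -> b = d -> (a, b) = (c, d).
Proof. intros; subst; reflexivity. Qed.

Lemma comp_Fam s q V p a k x : comp k (Fam s q V p a x) = (cos (PI * a) * uf s q V p k x, sin (PI * a) * uf s q V p k x).
Proof. destruct k; reflexivity. Qed.

Lemma W_comp s q V p a k y t :
  comp k (monochromatic (period s q) (Fam s q V p a) y t) =
  (alp (2 * PI / period s q) a t * uf s q V p k y, bet (2 * PI / period s q) a t * uf s q V p k y).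
Proof.
  replace (comp k (monochromatic (period s q) (Fam s q V p a) y t)) with
    (Cmult (cos (2 * PI / period s q * t), sin (2 * PI / period s q * t)) (comp k (Fam s q V p a y)))
    by (destruct k; reflexivity).
  rewrite comp_Fam. unfold Cmult, alp, bet. simpl. apply pair_eq; ring.
Qed.

Lemma W_form s q V p a y t :
  monochromatic (period s q) (Fam s q V p a) y t =
  ((alp (2 * PI / period s q) a t * uf s q V p A1 y, bet (2 * PI / period s q) a t * uf s q V p A1 y),
   (alp (2 * PI / period s q) a t * uf s q V p A2 y, bet (2 * PI / period s q) a t * uf s q V p A2 y),
   (alp (2 * PI / period s q) a t * uf s q V p A3 y, bet (2 * PI / period s q) a t * uf s q V p A3 y)).
Proof.
  rewrite <- (W_comp s q V p a A1), <- (W_comp s q V p a A2), <- (W_comp s q V p a A3). reflexivity.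
Qed.

Lemma pdC_W s q V p a k i x t :
  pdC i (fun y => comp k (monochromatic (period s q) (Fam s q V p a) y t)) x =
  (alp (2 * PI / period s q) a t * pd i (uf s q V p k) x, bet (2 * PI / period s q) a t * pd i (uf s q V p k) x).
Proof.
  unfold pdC.
  replace (fun y => Re (comp k (monochromatic (period s q) (Fam s q V p a) y t))) with
    (fun y => alp (2 * PI / period s q) a t * uf s q V p k y) by (extensionality y; rewrite W_comp; reflexivity).
  replace (fun y => Im (comp k (monochromatic (period s q) (Fam s q V p a) y t))) with
    (fun y => bet (2 * PI / period s q) a t * uf s q V p k y) by (extensionality y; rewrite W_comp; reflexivity).
  rewrite !pd_scal. reflexivity.
Qed.

Definition Z3 : C3 := ((0, 0), (0, 0), (0, 0)).

Lemma Cminus_diag (z : C) : Cminus z z = (0, 0).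
Proof. destruct z as [u v]. unfold Cminus, Cplus, Copp. simpl. apply pair_eq; ring. Qed.

Lemma curl_W s q V p a t :
  (forall j k x, pd j (uf s q V p k) x = pd k (uf s q V p j) x) ->
  curl (fun y => monochromatic (period s q) (Fam s q V p a) y t) = fun _ => Z3.
Proof.
  intro Sym. extensionality x. unfold curl. rewrite !pdC_W.
  rewrite (Sym A2 A3 x), (Sym A3 A1 x), (Sym A1 A2 x). rewrite !Cminus_diag. reflexivity.
Qed.

Lemma curl_zero x : curl (fun _ => Z3) x = Z3.
Proof.
  unfold curl, pdC, Z3. simpl.
  assert (E : forall i, pd i (fun _ : R3 => 0) x = 0) by (intro i; apply pd_const).
  rewrite !E. unfold Cminus, Cplus, Copp. simpl. rewrite Ropp_0, Rplus_0_r. reflexivity.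
Qed.

Lemma d2_alp w a U t : Derive_n (fun tau => alp w a tau * U) 2 t = - (w * w) * (alp w a t * U).
Proof.
  simpl. unfold alp.
  rewrite (Derive_ext _ (fun x => (- w * sin (w * x) * cos (PI * a) - w * cos (w * x) * sin (PI * a)) * U)).
  - apply is_derive_unique. auto_derive; auto. ring.
  - intro x. apply is_derive_unique. auto_derive; auto. ring.
Qed.

Lemma d2_bet w a U t : Derive_n (fun tau => bet w a tau * U) 2 t = - (w * w) * (bet w a t * U).
Proof.
  simpl. unfold bet.
  rewrite (Derive_ext _ (fun x => (- w * sin (w * x) * sin (PI * a) + w * cos (w * x) * cos (PI * a)) * U)).
  - apply is_derive_unique. auto_derive; auto. ring.
  - intro x. apply is_derive_unique. auto_derive; auto. ring.
Qed.

Lemma norm_W s q V p a x t : (forall x, 0 < s x) -> (forall x, 0 < q x) -> hgood (hf s q p) ->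
  c3norm (monochromatic (period s q) (Fam s q V p a) x t) = Bf s q V p x * hf s q p x.
Proof.
  intros Hs Hq G. rewrite W_form, c3norm_form by apply alp_bet. rewrite uf_sumsq by auto.
  apply sqrt_square. apply Rmult_le_pos; apply rpow_nonneg.
Qed.

Lemma norm_Fam s q V p a x : (forall x, 0 < s x) -> (forall x, 0 < q x) -> hgood (hf s q p) ->
  c3norm (Fam s q V p a x) = Bf s q V p x * hf s q p x.
Proof.
  intros Hs Hq G. unfold Fam. rewrite c3norm_form. rewrite uf_sumsq by auto.
  apply sqrt_square. apply Rmult_le_pos; apply rpow_nonneg.
  pose proof (sin2_cos2 (PI * a)). unfold Rsqr in *. lra.
Qed.

Lemma rpow_power_key Y Z p : 1 < p -> 0 < Y -> 0 < Z ->
  rpow (rpow Y (bb p) * rpow Z (bb p)) (p - 1) = Y * Z.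
Proof.
  intros Hp HY HZ. rewrite (rpow_pos Y), (rpow_pos Z) by auto.
  rewrite <- exp_plus. rewrite rpow_pos by apply exp_pos. rewrite ln_exp.
  replace ((p - 1) * (bb p * ln Y + bb p * ln Z)) with (ln Y + ln Z) by (unfold bb; field; intro; lra).
  rewrite exp_plus, !exp_ln by auto. reflexivity.
Qed.

Lemma key_eq s q V p sigma k x : 1 < p ->
  (forall x, 0 < s x) -> (forall x, 0 < q x) -> (forall x, 0 < V x) ->
  (sigma = 1 \/ sigma = -1) -> (forall x, x <> origin -> 0 < sigma * Dd s q x) -> hgood (hf s q p) ->
  uf s q V p k x * (- ((2 * PI / period s q) * (2 * PI / period s q)) * s x + q x +
     sigma * V x * rpow (Bf s q V p x * hf s q p x) (p - 1)) = 0.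
Proof.
  intros Hp Hs Hq HV Sg P G.
  destruct (R3_eq_dec x) as [E|E].
  - subst x. unfold uf. rewrite wv_origin by auto. ring.
  - unfold hf. rewrite (hf_sigma s q sigma Hs Hq Sg P x). unfold Bf.
    rewrite rpow_power_key; auto. 2: apply Yf_pos; auto.
    replace (sigma * V x * (Yf s q V x * (sigma * Dd s q x))) with ((sigma * sigma) * (V x * Yf s q V x * Dd s q x)) by ring.
    replace (sigma * sigma) with 1 by (destruct Sg; subst; ring).
    pose proof (period_pos s q Hs Hq) as TP. pose proof (Hs x). pose proof (HV x). pose proof (Hq x).
    assert (SS : sqrt (q x / s x) * sqrt (q x / s x) = q x / s x).
    { apply sqrt_sqrt. unfold Rdiv. left. apply Rmult_lt_0_compat; auto. apply Rinv_0_lt_compat; auto. }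
    unfold Yf, Dd, tt. set (S := sqrt (q x / s x)) in *. set (T := period s q) in *.
    replace (V x * (s x * (2 * PI + T * S) * / (T * T) * / V x) * (2 * PI - T * S))
      with (s x * (2 * PI) * (2 * PI) / (T * T) - s x * (S * S)) by (field; lra).
    rewrite SS. field. split; lra.
Qed.

Lemma solves_Fam s q V p sigma a : 1 < p ->
  (forall x, 0 < s x) -> (forall x, 0 < q x) -> (forall x, 0 < V x) ->
  radial s -> radial q -> radial V -> isC2 s -> isC2 q -> isC2 V ->
  (sigma = 1 \/ sigma = -1) -> (forall x, x <> origin -> 0 < sigma * Dd s q x) -> hgood (hf s q p) ->
  solves sigma p s q V (monochromatic (period s q) (Fam s q V p a)).
Proof.
  intros Hp Hs Hq HV Rs Rq RV Cs Cq CV Sg P G.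
  assert (Sym := fun j k => curl_sym s q V p j k Hs Hq HV Rs Rq RV Cs Cq CV G).
  unfold solves. intros x t k.
  rewrite (curl_W s q V p a t Sym), curl_zero.
  replace (comp k Z3) with ((0, 0) : C) by (destruct k; reflexivity).
  unfold d2t.
  set (w := 2 * PI / period s q).
  replace (fun tau => Re (comp k (monochromatic (period s q) (Fam s q V p a) x tau))) with
    (fun tau => alp w a tau * uf s q V p k x) by (extensionality tau; rewrite W_comp; reflexivity).
  replace (fun tau => Im (comp k (monochromatic (period s q) (Fam s q V p a) x tau))) with
    (fun tau => bet w a tau * uf s q V p k x) by (extensionality tau; rewrite W_comp; reflexivity).
  rewrite d2_alp, d2_bet, norm_W by auto. rewrite W_comp. fold w.
  pose proof (key_eq s q V p sigma k x Hp Hs Hq HV Sg P G) as K. fold w in K.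
  unfold Cplus, Cmult, RtoC. simpl. apply pair_eq.
  - transitivity (alp w a t * (uf s q V p k x * (- (w * w) * s x + q x + sigma * V x * rpow (Bf s q V p x * hf s q p x) (p - 1)))).
    ring. rewrite K. ring.
  - transitivity (bet w a t * (uf s q V p k x * (- (w * w) * s x + q x + sigma * V x * rpow (Bf s q V p x * hf s q p x) (p - 1)))).
    ring. rewrite K. ring.
Qed.

Lemma rpow_mono a c b : 0 < a -> a <= c -> 0 < b -> rpow a b <= rpow c b.
Proof.
  intros Ha Hac Hb. rewrite !rpow_pos by lra. destruct (Req_dec a c) as [E|E].
  - subst; lra.
  - left. apply exp_increasing. apply Rmult_lt_compat_l; auto. apply ln_increasing; lra.
Qed.

Lemma rpow_pos_pos a b : 0 < a -> 0 < rpow a b.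
Proof. intro H. rewrite rpow_pos by auto. apply exp_pos. Qed.

Lemma vnorm_shift_origin r : 0 <= r -> vnorm (shift A1 origin r) = r.
Proof. intro H. rewrite vnorm_Sq, Sq_shift_origin. apply sqrt_square; auto. Qed.

Lemma Y_ball_bound s q V R0 : (forall x, 0 < s x) -> (forall x, 0 < q x) -> (forall x, 0 < V x) ->
  radial s -> radial q -> radial V -> isC2 s -> isC2 q -> isC2 V -> 0 <= R0 ->
  exists Ym, forall x, vnorm x <= R0 -> Yf s q V x <= Ym.
Proof.
  intros Hs Hq HV Rs Rq RV Cs Cq CV HR.
  destruct (C2_Yf s q V Hs Hq HV Cs Cq CV) as [C _].
  destruct (continuity_ab_maj (fun r => Yf s q V (shift A1 origin r)) 0 R0 HR) as [Mx [H1 H2]].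
  { intros c _. apply continuity_pt_filterlim.
    apply (continuous_comp (fun r => shift A1 origin r) (Yf s q V)). apply cont_shift. apply (proj1 (C _ I)). }
  exists (Yf s q V (shift A1 origin Mx)). intros x Hx.
  assert (E : Yf s q V x = Yf s q V (shift A1 origin (vnorm x))).
  { unfold Yf, tt. assert (N : vnorm x = vnorm (shift A1 origin (vnorm x))) by (rewrite vnorm_shift_origin; auto; rewrite vnorm_Sq; apply sqrt_pos).
    rewrite (Rs _ _ N), (Rq _ _ N), (RV _ _ N). reflexivity. }
  rewrite E. apply H1. split; auto. rewrite vnorm_Sq; apply sqrt_pos.
Qed.

Lemma decay s q V p sigma delta a : 1 < p ->
  (forall x, 0 < s x) -> (forall x, 0 < q x) -> (forall x, 0 < V x) ->
  radial s -> radial q -> radial V -> isC2 s -> isC2 q -> isC2 V ->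
  (sigma = 1 \/ sigma = -1) -> (forall x, x <> origin -> 0 < sigma * Dd s q x) -> hgood (hf s q p) ->
  0 < delta ->
  (exists M : R, forall x,
      Rabs (2 * PI - period s q * sqrt (q x / s x)) * exp (delta * (p - 1) * vnorm x) <= M) ->
  (exists M : R, forall x, q x / V x <= M) ->
  exists M : R, forall x, c3norm (Fam s q V p a x) * exp (delta * vnorm x) <= M.
Proof.
  intros Hp Hs Hq HV Rs Rq RV Cs Cq CV Sg P G Hd [M3 H3] [M4 H4].
  assert (M3pos : 0 <= M3) by (specialize (H3 origin); pose proof (Rabs_pos (2 * PI - period s q * sqrt (q origin / s origin))); pose proof (exp_pos (delta * (p - 1) * vnorm origin)); nra).
  assert (M4pos : 0 <= M4) by (specialize (H4 origin); pose proof (Hq origin); pose proof (HV origin);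
    assert (0 < q origin / V origin) by (unfold Rdiv; apply Rmult_lt_0_compat; auto; apply Rinv_0_lt_compat; auto); lra).
  pose proof PI_RGT_0 as PIpos.
  set (R0 := Rmax 0 (ln (M3 / PI + 1) / (delta * (p - 1)))).
  destruct (Y_ball_bound s q V R0 Hs Hq HV Rs Rq RV Cs Cq CV (Rmax_l _ _)) as [Ym HY].
  assert (Ympos : 0 < Ym) by (apply (Rlt_le_trans _ (Yf s q V origin)); [apply Yf_pos; auto| apply HY; rewrite vnorm_Sq; unfold Sq, origin, coord, x1, x2, x3; simpl; rewrite Rmult_0_l, !Rplus_0_l, sqrt_0; apply Rmax_l]).
  set (M' := 3 / PI * M4 * M3 + Ym * M3 + 1).
  exists (rpow M' (bb p)). intro x.
  rewrite norm_Fam by auto.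
  assert (bpos : 0 < bb p) by (unfold bb; apply Rdiv_lt_0_compat; lra).
  destruct (R3_eq_dec x) as [E|E].
  - subst x. rewrite (proj1 (proj2 G)), Rmult_0_r, Rmult_0_l. apply rpow_nonneg.
  - pose proof (P x E) as PD. unfold hf. rewrite (hf_sigma s q sigma Hs Hq Sg P x). unfold Bf.
    pose proof (Yf_pos s q V x Hs Hq HV) as YP.
    set (r := vnorm x). set (Dx := Dd s q x). set (Yx := Yf s q V x).
    assert (EQ : rpow Yx (bb p) * rpow (sigma * Dx) (bb p) * exp (delta * r) = rpow (Yx * (sigma * Dx) * exp (delta * (p - 1) * r)) (bb p)).
    { assert (Q1 : 0 < Yx * (sigma * Dx)) by (apply Rmult_lt_0_compat; auto).
      pose proof (exp_pos (delta * (p - 1) * r)) as Q2.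
      rewrite (rpow_pos Yx) by auto. rewrite (rpow_pos (sigma * Dx)) by auto.
      rewrite (rpow_pos (Yx * (sigma * Dx) * exp (delta * (p - 1) * r))) by (apply Rmult_lt_0_compat; auto).
      rewrite <- !exp_plus. f_equal.
      rewrite (ln_mult (Yx * (sigma * Dx))) by auto. rewrite (ln_mult Yx) by auto. rewrite ln_exp.
      unfold bb. field. lra. }
    rewrite EQ. apply rpow_mono; auto. apply Rmult_lt_0_compat; [apply Rmult_lt_0_compat; auto| apply exp_pos].
    specialize (H3 x). fold r in H3.
    assert (AD : Rabs (2 * PI - period s q * sqrt (q x / s x)) = sigma * Dx).
    { unfold Dx. rewrite <- (hf_sigma s q sigma Hs Hq Sg P x). reflexivity. }
    rewrite AD in H3.
    pose proof (exp_pos (delta * (p - 1) * r)) as EP.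
    assert (B1 : Yx * (sigma * Dx) * exp (delta * (p - 1) * r) <= Yx * M3).
    { rewrite Rmult_assoc. apply Rmult_le_compat_l; [left; exact YP|exact H3]. }
    pose proof (tt_nonneg s q x Hs Hq) as TN.
    destruct (Rle_or_lt PI (tt s q x)) as [TT|TT].
    +
      assert (Yx <= 3 / PI * M4).
      { unfold Yx, Yf. pose proof (period_pos s q Hs Hq) as TP. pose proof (Hs x). pose proof (HV x). pose proof (Hq x).
        specialize (H4 x).
        assert (SS : tt s q x * tt s q x = period s q * period s q * (q x / s x)).
        { unfold tt. replace (period s q * sqrt (q x / s x) * (period s q * sqrt (q x / s x))) with
            (period s q * period s q * (sqrt (q x / s x) * sqrt (q x / s x))) by ring.
          rewrite sqrt_sqrt. reflexivity. unfold Rdiv; left; apply Rmult_lt_0_compat; auto; apply Rinv_0_lt_compat; auto. }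
        set (u := tt s q x) in *. set (T := period s q) in *.
        replace (s x * (2 * PI + u) * / (T * T) * / V x) with ((q x / V x) * ((2 * PI + u) / (u * u))).
        2: { rewrite SS. field. repeat split; lra. }
        assert (U : (2 * PI + u) / (u * u) <= 3 / PI).
        { assert (U0 : PI <= u) by exact TT.
          apply (Rmult_le_reg_r (u * u * PI)). apply Rmult_lt_0_compat; [apply Rmult_lt_0_compat|]; lra. unfold Rdiv.
          replace ((2 * PI + u) * / (u * u) * (u * u * PI)) with ((2 * PI + u) * PI) by (field; lra).
          replace (3 * / PI * (u * u * PI)) with (3 * (u * u)) by (field; lra). nra. }
        assert (0 < q x / V x) by (unfold Rdiv; apply Rmult_lt_0_compat; auto; apply Rinv_0_lt_compat; auto).
        assert (0 <= (2 * PI + u) / (u * u)) by (unfold Rdiv; apply Rmult_le_pos; [lra| left; apply Rinv_0_lt_compat; nra]).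
        apply (Rle_trans _ (M4 * ((2 * PI + u) / (u * u)))). apply Rmult_le_compat_r; lra.
        rewrite Rmult_comm. apply Rmult_le_compat_r; lra. }
      unfold M'. assert (0 <= Ym * M3) by nra.
      apply (Rle_trans _ (Yx * M3)); auto. assert (Yx * M3 <= 3 / PI * M4 * M3) by (apply Rmult_le_compat_r; lra). lra.
    + (* small tt: x in a ball *)
      assert (DX : PI < sigma * Dx).
      { rewrite <- AD. unfold tt in TT. rewrite Rabs_right; lra. }
      assert (ER : exp (delta * (p - 1) * r) < M3 / PI + 1).
      { apply (Rmult_lt_reg_l PI); auto. apply (Rle_lt_trans _ (sigma * Dx * exp (delta * (p - 1) * r))).
        apply Rmult_le_compat_r; lra. apply (Rle_lt_trans _ M3); auto.
        replace (PI * (M3 / PI + 1)) with (M3 + PI) by (field; lra). lra. }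
      assert (RB : r <= R0).
      { unfold R0. eapply Rle_trans. 2: apply Rmax_r.
        apply ln_increasing in ER; [|apply exp_pos]. rewrite ln_exp in ER.
        assert (0 < delta * (p - 1)) by (apply Rmult_lt_0_compat; lra).
        apply (Rmult_le_reg_r (delta * (p - 1))); auto. unfold Rdiv. rewrite Rmult_assoc, Rinv_l by lra. lra. }
      assert (Yx <= Ym) by (apply HY; auto).
      unfold M'. assert (0 <= 3 / PI * M4 * M3) by (unfold Rdiv; repeat apply Rmult_le_pos; try lra; left; apply Rinv_0_lt_compat; lra).
      apply (Rle_trans _ (Yx * M3)); auto. assert (Yx * M3 <= Ym * M3) by (apply Rmult_le_compat_r; lra). lra.
Qed.

Lemma uf_pos_star s q V p sigma : (forall x, 0 < s x) -> (forall x, 0 < q x) -> (forall x, 0 < V x) ->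
  (sigma = 1 \/ sigma = -1) -> (forall x, x <> origin -> 0 < sigma * Dd s q x) ->
  0 < uf s q V p A1 (shift A1 origin 1).
Proof.
  intros Hs Hq HV Sg P. set (xs := shift A1 origin 1).
  assert (NZ : xs <> origin) by (apply shift_origin_nz; lra).
  unfold uf, wv, ev.
  assert (C1 : coord A1 xs = 1) by (unfold xs; rewrite coord_shift; unfold origin, coord, dl, x1; simpl; ring).
  rewrite C1. apply Rmult_lt_0_compat. unfold Bf. apply rpow_pos_pos. apply Yf_pos; auto.
  apply Rmult_lt_0_compat. unfold hf. rewrite (hf_sigma s q sigma Hs Hq Sg P xs). apply rpow_pos_pos. apply P; auto.
  rewrite Rmult_1_l. apply rho_pos; auto.
Qed.

Lemma Fam_inj s q V p sigma a b : (forall x, 0 < s x) -> (forall x, 0 < q x) -> (forall x, 0 < V x) ->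
  (sigma = 1 \/ sigma = -1) -> (forall x, x <> origin -> 0 < sigma * Dd s q x) ->
  0 < a < 1 -> 0 < b < 1 -> a <> b -> Fam s q V p a <> Fam s q V p b.
Proof.
  intros Hs Hq HV Sg P Ha Hb Hab E.
  pose proof (uf_pos_star s q V p sigma Hs Hq HV Sg P) as U.
  apply (f_equal (fun F => Re (comp A1 (F (shift A1 origin 1))))) in E. cbv beta in E. rewrite !comp_Fam in E.
  unfold Re in E. cbn [fst] in E.
  set (u := uf s q V p A1 (shift A1 origin 1)) in *.
  assert (C : cos (PI * a) = cos (PI * b)).
  { apply (Rmult_eq_reg_r u). exact E. apply Rgt_not_eq. exact U. }
  pose proof PI_RGT_0 as PP.
  assert (K : forall c, 0 < c < 1 -> 0 <= PI * c /\ PI * c <= PI).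
  { intros c Hc. split. apply Rmult_le_pos; lra. rewrite <- (Rmult_1_r PI) at 2. apply Rmult_le_compat_l; lra. }
  destruct (K a Ha) as [Ka1 Ka2]. destruct (K b Hb) as [Kb1 Kb2].
  destruct (Rlt_or_le a b) as [L|L].
  - assert (cos (PI * b) < cos (PI * a)). { apply cos_decreasing_1; auto. apply Rmult_lt_compat_l; lra. } lra.
  - assert (b < a) by lra. assert (cos (PI * a) < cos (PI * b)). { apply cos_decreasing_1; auto. apply Rmult_lt_compat_l; lra. } lra.
Qed.

Lemma main_sigma (p : R) (s q V : R3 -> R) (delta sigma : R) :
  1 < p ->
  (forall x, 0 < s x) -> (forall x, 0 < q x) -> (forall x, 0 < V x) ->
  radial s -> radial q -> radial V ->
  isC2 s -> isC2 q -> isC2 V ->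
  C2_to_zero_at_origin
    (fun x => rpow (Rabs (2 * PI - period s q * sqrt (q x / s x))) (1 / (p - 1))) ->
  0 < delta ->
  (exists M : R, forall x,
      Rabs (2 * PI - period s q * sqrt (q x / s x)) * exp (delta * (p - 1) * vnorm x) <= M) ->
  (exists M : R, forall x, q x / V x <= M) ->
  (sigma = 1 \/ sigma = -1) -> (forall x, x <> origin -> 0 < sigma * Dd s q x) ->
  continuum_of_breathers sigma p s q V delta.
Proof.
  intros Hp Hs Hq HV Rs Rq RV Cs Cq CV H2 Hd H3 H4 Sg P.
  assert (G : hgood (hf s q p)) by (apply (hgood_hf s q p sigma); auto).
  exists (Fam s q V p). split.
  - intros a b Ha Hb Hab. apply (Fam_inj s q V p sigma); auto.
  - intros a Ha. split; [|split].
    + intro k. 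
      replace (fun x => Re (comp k (Fam s q V p a x))) with (fun x => cos (PI * a) * uf s q V p k x)
        by (extensionality x; rewrite comp_Fam; reflexivity).
      replace (fun x => Im (comp k (Fam s q V p a x))) with (fun x => sin (PI * a) * uf s q V p k x)
        by (extensionality x; rewrite comp_Fam; reflexivity).
      pose proof (C2_uf s q V p k Hs Hq HV Cs Cq CV G) as CU. apply isC2_C2on in CU.
      split; apply isC2_C2on; apply C2on_scal; auto; apply openT.
    + apply solves_Fam; auto.
    + apply (decay s q V p sigma delta a); auto.
Qed.

Theorem theorem1p3 (p : R) (s q V : R3 -> R) (delta : R) :
  1 < p ->
  (forall x, 0 < s x) -> (forall x, 0 < q x) -> (forall x, 0 < V x) ->
  radial s -> radial q -> radial V ->
  isC2 s -> isC2 q -> isC2 V ->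
  (* (H2) *)
  C2_to_zero_at_origin
    (fun x => rpow (Rabs (2 * PI - period s q * sqrt (q x / s x))) (1 / (p - 1))) ->
  (* (H3) *)
  0 < delta ->
  (exists M : R, forall x,
      Rabs (2 * PI - period s q * sqrt (q x / s x)) * exp (delta * (p - 1) * vnorm x) <= M) ->
  (* (H4) *)
  (exists M : R, forall x, q x / V x <= M) ->
  (* case (H1): sign + ; case (H1)': sign - *)
  ((forall x, x <> origin -> period s q * sqrt (q x / s x) < 2 * PI) ->
     continuum_of_breathers 1 p s q V delta) /\
  ((forall x, x <> origin -> period s q * sqrt (q x / s x) > 2 * PI) ->
     continuum_of_breathers (-1) p s q V delta).
Proof.
  intros Hp Hs Hq HV Rs Rq RV Cs Cq CV H2 Hd H3 H4. split; intro H1.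
  - apply (main_sigma p s q V delta 1); auto.
    intros x Hx. specialize (H1 x Hx). unfold Dd. lra.
  - apply (main_sigma p s q V delta (-1)); auto.
    intros x Hx. specialize (H1 x Hx). unfold Dd. lra.
Qed.
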